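(* Let $\Omega\subset\mathbb{R}^2$ be an open convex polygon with corners $\mathbf P_1,\dots,\mathbf P_{\mathcal N_\Gamma}$, side lengths $L_1,\dots,L_{\mathcal N_\Gamma}$, and exterior angle $\Omega_j\in(\pi,2\pi)$ at $\mathbf P_j$; let $\omega\subset\mathbb{R}^2\setminus\overline\Omega$ be a bounded open set consisting of finitely many pairwise disjoint components with Lipschitz piecewise-$C^1$ boundaries, $\gamma=\partial\omega$, $\mathrm{dist}(\Omega,\omega)>0$, and $D=\mathbb{R}^2\setminus(\overline\Omega\cup\overline\omega)$. Let $k>0$, $c_*>0$ with $kL_j\ge c_*$ for all $j$, $u^i(\mathbf x)=e^{\mathrm ik\mathbf x\cdot\mathbf d}$ for a unit vector $\mathbf d$, and let $u\in C^2(D)\cap C(\overline D)$ satisfy $\Delta u+k^2u=0$ in $D$, $u=0$ on $\partial D$, with $u-u^i$ satisfying the Sommerfeld radiation condition. Let $u_{\max}(k)=\|u\|_{L^\infty(D)}$. Suppose $\mathbf x\in D$ satisfies $r:=|\mathbf x-\mathbf P_j|\in(0,1/k]$ and $r<\mathrm{dist}(\mathbf P_j,\gamma)$. Then there exists a constant $C>0$, depending only on $\partial D$ and $c_*$, such that $$|u(\mathbf x)|\le C(kr)^{\pi/\Omega_j}u_{\max}(k).$$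
   Context: The Sommerfeld radiation condition for $u^s=u-u^i$ is $\partial u^s/\partial r-\mathrm iku^s=o(r^{-1/2})$ as $r=|\mathbf x|\to\infty$. *)

(* Defs.v *)
From Stdlib Require Import Reals Lra.
From Coquelicot Require Import Coquelicot.
Open Scope R_scope.

Definition pt := (R * R)%type.
Definition pset := pt -> Prop.

Definition dist2 (p q : pt) : R :=
  sqrt ((fst p - fst q) ^ 2 + (snd p - snd q) ^ 2).
Definition norm2 (p : pt) : R := sqrt (fst p ^ 2 + snd p ^ 2).
Definition dot2 (a b : pt) : R := fst a * fst b + snd a * snd b.
Definition vsub (a b : pt) : pt := (fst a - fst b, snd a - snd b).
Definition cross2 (a b : pt) : R := fst a * snd b - snd a * fst b.

Definition open_set (S : pset) : Prop :=
  forall p, S p -> exists e, 0 < e /\ forall q, dist2 p q < e -> S q.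
Definition closure (S : pset) : pset :=
  fun p => forall e, 0 < e -> exists q, S q /\ dist2 p q < e.
Definition compl (S : pset) : pset := fun p => ~ S p.
Definition boundary (S : pset) : pset :=
  fun p => closure S p /\ closure (compl S) p.
Definition bounded_set (S : pset) : Prop :=
  exists M, forall p, S p -> norm2 p <= M.
Definition connected_open (S : pset) : Prop :=
  forall A B : pset, open_set A -> open_set B ->
    (forall p, S p <-> (A p \/ B p)) -> (forall p, ~ (A p /\ B p)) ->
    (forall p, ~ A p) \/ (forall p, ~ B p).
Definition dist_sets_pos (A B : pset) : Prop :=
  exists delta, 0 < delta /\ forall a b, A a -> B b -> delta <= dist2 a b.
Definition lt_dist_pt_set (r : R) (p : pt) (A : pset) : Prop :=
  exists delta, r < delta /\ forall a, A a -> delta <= dist2 p a.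

(* ---- Lipschitz boundary: locally the (rotated) epigraph of a Lipschitz graph ---- *)
Definition lipschitz_fun (g : R -> R) : Prop :=
  exists Lg, forall a b, Rabs (g a - g b) <= Lg * Rabs (a - b).
Definition lipschitz_boundary (S : pset) : Prop :=
  forall p, boundary S p ->
    exists (theta rho h : R) (g : R -> R),
      0 < rho /\ 0 < h /\ lipschitz_fun g /\ g 0 = 0 /\
      (forall s, Rabs s < rho -> Rabs (g s) < h) /\
      forall q : pt,
        let s := cos theta * (fst q - fst p) + sin theta * (snd q - snd p) in
        let t := - sin theta * (fst q - fst p) + cos theta * (snd q - snd p) in
        Rabs s < rho -> Rabs t < h -> (S q <-> g s < t).

Definition C1_on_01 (f : R -> R) : Prop :=
  forall t, 0 <= t <= 1 -> ex_derive f t /\ continuity_pt (Derive f) t.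
Definition C1_curve (c : R -> pt) : Prop :=
  C1_on_01 (fun t => fst (c t)) /\ C1_on_01 (fun t => snd (c t)).
Definition piecewise_C1_boundary (S : pset) : Prop :=
  exists (n : nat) (c : nat -> R -> pt),
    (forall i, (i < n)%nat -> C1_curve (c i)) /\
    forall p, boundary S p <->
      exists i t, (i < n)%nat /\ 0 <= t <= 1 /\ c i t = p.

Definition admissible_obstacle (omega : pset) : Prop :=
  open_set omega /\ bounded_set omega /\
  exists (m : nat) (W : nat -> pset),
    (0 < m)%nat /\
    (forall i, (i < m)%nat ->
        open_set (W i) /\ connected_open (W i) /\ (exists p, W i p) /\
        lipschitz_boundary (W i) /\ piecewise_C1_boundary (W i)) /\
    (forall i j p, (i < m)%nat -> (j < m)%nat -> i <> j -> ~ (W i p /\ W j p)) /\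
    (forall p, omega p <-> exists i, (i < m)%nat /\ W i p).

(* ---- convex polygon with vertices P 0, ..., P (N-1) listed counterclockwise ---- *)
Definition vtx (N : nat) (P : nat -> pt) (j : nat) : pt := P (j mod N)%nat.
Definition convex_polygon (N : nat) (P : nat -> pt) : Prop :=
  (3 <= N)%nat /\
  forall j k, (j < N)%nat -> (k < N)%nat -> k <> j -> k <> ((j + 1) mod N)%nat ->
    0 < cross2 (vsub (vtx N P (j + 1)) (vtx N P j)) (vsub (P k) (vtx N P j)).
Definition polygon_interior (N : nat) (P : nat -> pt) : pset :=
  fun x => forall j, (j < N)%nat ->
    0 < cross2 (vsub (vtx N P (j + 1)) (vtx N P j)) (vsub x (vtx N P j)).
Definition side_length (N : nat) (P : nat -> pt) (j : nat) : R :=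
  dist2 (vtx N P (j + 1)) (vtx N P j).
Definition exterior_angle (N : nat) (P : nat -> pt) (j : nat) : R :=
  let a := vsub (vtx N P (j + N - 1)) (vtx N P j) in
  let b := vsub (vtx N P (j + 1)) (vtx N P j) in
  2 * PI - acos (dot2 a b / (norm2 a * norm2 b)).

Definition exterior_domain (Omega omega : pset) : pset :=
  fun x => ~ closure Omega x /\ ~ closure omega x.

Definition dx (f : pt -> R) : pt -> R :=
  fun p => Derive (fun t => f (t, snd p)) (fst p).
Definition dy (f : pt -> R) : pt -> R :=
  fun p => Derive (fun t => f (fst p, t)) (snd p).
Definition ex_dx (f : pt -> R) (p : pt) : Prop := ex_derive (fun t => f (t, snd p)) (fst p).
Definition ex_dy (f : pt -> R) (p : pt) : Prop := ex_derive (fun t => f (fst p, t)) (snd p).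
Definition cont_at (f : pt -> R) (p : pt) : Prop :=
  forall e, 0 < e -> exists d, 0 < d /\ forall q, dist2 p q < d -> Rabs (f q - f p) < e.
Definition C2_on (S : pset) (f : pt -> R) : Prop :=
  forall p, S p ->
    ex_dx f p /\ ex_dy f p /\
    ex_dx (dx f) p /\ ex_dy (dx f) p /\ ex_dx (dy f) p /\ ex_dy (dy f) p /\
    cont_at f p /\ cont_at (dx f) p /\ cont_at (dy f) p /\
    cont_at (dx (dx f)) p /\ cont_at (dy (dx f)) p /\
    cont_at (dx (dy f)) p /\ cont_at (dy (dy f)) p.
Definition laplacian (f : pt -> R) : pt -> R := fun p => dx (dx f) p + dy (dy f) p.

Definition Re_f (u : pt -> C) : pt -> R := fun p => fst (u p).
Definition Im_f (u : pt -> C) : pt -> R := fun p => snd (u p).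

Definition C2_on_C (S : pset) (u : pt -> C) : Prop := C2_on S (Re_f u) /\ C2_on S (Im_f u).
Definition continuous_on_C (A : pset) (u : pt -> C) : Prop :=
  forall p, A p -> forall e, 0 < e -> exists d, 0 < d /\
    forall q, A q -> dist2 p q < d -> Cmod (Cminus (u q) (u p)) < e.
Definition helmholtz_at (k : R) (u : pt -> C) (p : pt) : Prop :=
  laplacian (Re_f u) p + k ^ 2 * Re_f u p = 0 /\
  laplacian (Im_f u) p + k ^ 2 * Im_f u p = 0.

Definition plane_wave (k : R) (d : pt) : pt -> C :=
  fun x => (cos (k * dot2 x d), sin (k * dot2 x d)).

Definition radial_deriv (f : pt -> R) (x : pt) : R :=
  Derive (fun t => f (t * fst x / norm2 x, t * snd x / norm2 x)) (norm2 x).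
Definition radial_deriv_C (u : pt -> C) (x : pt) : C :=
  (radial_deriv (Re_f u) x, radial_deriv (Im_f u) x).

Definition sommerfeld (k : R) (us : pt -> C) : Prop :=
  forall e, 0 < e -> exists R0, forall x, R0 < norm2 x ->
    sqrt (norm2 x) * Cmod (Cminus (radial_deriv_C us x) (Cmult (Cmult Ci (RtoC k)) (us x))) < e.

Definition sup_norm_on (D : pset) (u : pt -> C) : Rbar :=
  Lub_Rbar (fun v => exists y, D y /\ v = Cmod (u y)).

(* Main.v *)
Require Import Defs.
From Stdlib Require Import Reals Lra Lia Nsatz Arith Classical ClassicalEpsilon.
From Coquelicot Require Import Coquelicot.
Open Scope R_scope.

Definition clampR (a b x : R) : R := Rmax a (Rmin b x).

Lemma clamp_in a b x : a <= b -> a <= clampR a b x <= b.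
Proof. intros; unfold clampR, Rmax, Rmin; repeat destruct Rle_dec; lra. Qed.
Lemma clamp_id a b x : a <= x <= b -> clampR a b x = x.
Proof. intros; unfold clampR, Rmax, Rmin; repeat destruct Rle_dec; lra. Qed.
Lemma clamp_lip a b x y : a <= b -> Rabs (clampR a b x - clampR a b y) <= Rabs (x - y).
Proof. intros; unfold clampR, Rmax, Rmin; repeat destruct Rle_dec; unfold Rabs;
  repeat destruct Rcase_abs; lra. Qed.

Lemma cont_pt_of (f : R -> R) x :
  (forall e, 0 < e -> exists d, 0 < d /\ forall y, Rabs (y - x) < d -> Rabs (f y - f x) < e) ->
  continuity_pt f x.
Proof.
  intros H e He. destruct (H e He) as [d [Hd Hy]]. exists d; split; auto.
  intros y [_ Hy']. apply Hy. exact Hy'.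
Qed.

Definition rect (a b c d s p : R) := a <= s <= b /\ c <= p <= d.
Definition rcont (a b c d : R) (G : R -> R -> R) :=
  forall s p, rect a b c d s p -> forall e, 0 < e -> exists dl, 0 < dl /\
    forall s' p', rect a b c d s' p' -> Rabs (s' - s) < dl -> Rabs (p' - p) < dl ->
      Rabs (G s' p' - G s p) < e.

Lemma rcont_unif a b c d G : rcont a b c d G ->
  forall e, 0 < e -> exists d0, 0 < d0 /\ forall s p s' p', rect a b c d s p -> rect a b c d s' p' ->
    Rabs (s - s') < d0 -> Rabs (p - p') < d0 -> Rabs (G s p - G s' p') < e.
Proof.
  intros HG e He.
  assert (H : forall u v, exists dl : posreal, rect a b c d u v -> forall s' p', rect a b c d s' p' ->
     Rabs (s' - u) < dl -> Rabs (p' - v) < dl -> Rabs (G s' p' - G u v) < e / 2).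
  { intros u v. destruct (classic (rect a b c d u v)) as [Hr|Hr].
    - destruct (HG u v Hr (e/2)) as [dl [Hdl Hd]]. lra. exists (mkposreal dl Hdl). intros _; exact Hd.
    - exists (mkposreal 1 Rlt_0_1). intros; contradiction. }
  set (dl := fun u v => proj1_sig (constructive_indefinite_description _ (H u v))).
  assert (Hdl : forall u v, rect a b c d u v -> forall s' p', rect a b c d s' p' ->
     Rabs (s' - u) < dl u v -> Rabs (p' - v) < dl u v -> Rabs (G s' p' - G u v) < e / 2).
  { intros u v. unfold dl. destruct (constructive_indefinite_description _ (H u v)) as [x Hx]. exact Hx. }
  assert (Hpos : forall u v, 0 < dl u v / 2).
  { intros u v. pose proof (cond_pos (dl u v)). lra. }
  destruct (compactness_value_2d a b c d (fun u v => mkposreal _ (Hpos u v))) as [d0 Hd0].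
  exists d0. split; [apply cond_pos|].
  intros s p s' p' Hr Hr' H1 H2.
  apply NNPP. intro Hn. apply (Hd0 s p (proj1 Hr) (proj2 Hr)).
  intros [u [v [Hu [Hv [Hsu [Hpv Hle]]]]]]. apply Hn. simpl in *.
  assert (Hruv : rect a b c d u v) by (split; auto).
  assert (A1 := Hdl u v Hruv s p Hr). assert (A2 := Hdl u v Hruv s' p' Hr').
  assert (Hs' : Rabs (s' - u) < dl u v).
  { replace (s' - u) with ((s' - s) + (s - u)) by ring.
    eapply Rle_lt_trans; [apply Rabs_triang|]. rewrite Rabs_minus_sym in H1. lra. }
  assert (Hp' : Rabs (p' - v) < dl u v).
  { replace (p' - v) with ((p' - p) + (p - v)) by ring.
    eapply Rle_lt_trans; [apply Rabs_triang|]. rewrite Rabs_minus_sym in H2. lra. }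
  pose proof (Hpos u v). 
  specialize (A1 ltac:(lra) ltac:(lra)). specialize (A2 Hs' Hp').
  replace (G s p - G s' p') with ((G s p - G u v) - (G s' p' - G u v)) by ring.
  eapply Rle_lt_trans; [apply Rabs_triang|]. rewrite Rabs_Ropp. lra.
Qed.

Lemma EVT2 a b c d G : a <= b -> c <= d -> rcont a b c d G ->
  exists s0 p0, rect a b c d s0 p0 /\ forall s p, rect a b c d s p -> G s0 p0 <= G s p.
Proof.
  intros Hab Hcd HG. pose proof (rcont_unif _ _ _ _ _ HG) as HU.
  assert (H1 : forall s, exists pm, a <= s <= b -> c <= pm <= d /\ forall p, c <= p <= d -> G s pm <= G s p).
  { intros s. destruct (classic (a <= s <= b)) as [Hs|Hs]; [|exists c; tauto].
    destruct (continuity_ab_min (fun p => G s (clampR c d p)) c d Hcd) as [pm [Hm Hpm]].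
    - intros p _. apply cont_pt_of. intros e He. destruct (HU e He) as [d0 [Hd0 Hu]].
      exists d0; split; auto. intros y Hy. apply Hu.
      + split; auto. apply clamp_in; auto.
      + split; auto. apply clamp_in; auto.
      + rewrite Rminus_eq_0, Rabs_R0; auto.
      + eapply Rle_lt_trans; [apply clamp_lip; auto| exact Hy].
    - exists pm. intros _. split; auto. intros p Hp. specialize (Hm p Hp).
      rewrite !clamp_id in Hm; auto. }
  set (pm := fun s => proj1_sig (constructive_indefinite_description _ (H1 s))).
  assert (Hpm : forall s, a <= s <= b -> c <= pm s <= d /\ forall p, c <= p <= d -> G s (pm s) <= G s p).
  { intros s. unfold pm. destruct (constructive_indefinite_description _ (H1 s)) as [x Hx]. exact Hx. }
  destruct (continuity_ab_min (fun s => G (clampR a b s) (pm (clampR a b s))) a b Hab) as [sm [Hm Hsm]].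
  - intros s _. apply cont_pt_of. intros e He. destruct (HU e He) as [d0 [Hd0 Hu]].
    exists d0; split; auto. intros y Hy.
    set (y' := clampR a b y). set (s' := clampR a b s).
    assert (Hy' : a <= y' <= b) by (apply clamp_in; auto).
    assert (Hs' : a <= s' <= b) by (apply clamp_in; auto).
    assert (Hys : Rabs (y' - s') < d0) by (eapply Rle_lt_trans; [apply clamp_lip; auto| exact Hy]).
    destruct (Hpm y' Hy') as [Py1 Py2]. destruct (Hpm s' Hs') as [Ps1 Ps2].
    assert (E1 : Rabs (G y' (pm s') - G s' (pm s')) < e).
    { apply Hu; try (split; auto); auto. rewrite Rminus_eq_0, Rabs_R0; auto. }
    assert (E2 : Rabs (G y' (pm y') - G s' (pm y')) < e).
    { apply Hu; try (split; auto); auto. rewrite Rminus_eq_0, Rabs_R0; auto. }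
    specialize (Py2 _ Ps1). specialize (Ps2 _ Py1).
    revert E1 E2; unfold Rabs; repeat destruct Rcase_abs; intros; lra.
  - exists sm, (pm sm). rewrite clamp_id in Hm; auto.
    destruct (Hpm sm Hsm) as [Hp1 Hp2]. split; [split; auto|].
    intros s p [Hs Hp]. specialize (Hm s Hs). rewrite clamp_id in Hm; auto.
    specialize (Hpm s Hs) as [_ Hq]. specialize (Hq p Hp). lra.
Qed.

Lemma fermat_min (g : R -> R) t0 dl : 0 < dl ->
  (forall t, Rabs (t - t0) < dl -> g t0 <= g t) -> ex_derive g t0 -> Derive g t0 = 0.
Proof.
  intros Hd Hm [l Hl]. rewrite (is_derive_unique _ _ _ Hl).
  apply is_derive_Reals in Hl.
  set (pr := exist (fun l => derivable_pt_abs g t0 l) l Hl : derivable_pt g t0).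
  change l with (derive_pt g t0 pr).
  apply (deriv_minimum g (t0 - dl) (t0 + dl)); try lra.
  intros x H1 H2. apply Hm. unfold Rabs; destruct Rcase_abs; lra.
Qed.

Lemma second_deriv_min (g : R -> R) t0 dl : 0 < dl ->
  (forall t, Rabs (t - t0) < dl -> g t0 <= g t) ->
  (forall t, Rabs (t - t0) < dl -> ex_derive g t) ->
  ex_derive (Derive g) t0 -> 0 <= Derive (Derive g) t0.
Proof.
  intros Hd Hm Hex [D2 HD2]. rewrite (is_derive_unique _ _ _ HD2).
  destruct (Rle_or_lt 0 D2) as [|Hneg]; auto. exfalso.
  assert (Hg0 : Derive g t0 = 0).
  { apply (fermat_min g t0 dl); auto. apply Hex. rewrite Rminus_eq_0, Rabs_R0; auto. }
  apply is_derive_Reals in HD2.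
  destruct (HD2 (- D2 / 2) ltac:(lra)) as [eta Heta].
  assert (Hneg' : forall h, 0 < h -> h < eta -> Derive g (t0 + h) < 0).
  { intros h H1 H2. assert (h <> 0) by lra.
    assert (Rabs h < eta) by (rewrite Rabs_pos_eq; lra).
    specialize (Heta h H H0). rewrite Hg0 in Heta.
    replace ((Derive g (t0 + h) - 0) / h - D2) with (Derive g (t0 + h) / h - D2) in Heta by (field; lra).
    apply Rabs_def2 in Heta. destruct Heta as [Ha Hb].
    assert (Derive g (t0 + h) / h < 0) by lra.
    assert (Derive g (t0+h) = (Derive g (t0 + h) / h) * h) by (field; lra).
    rewrite H4. apply Rmult_neg_pos; auto. }
  pose proof (cond_pos eta) as Heta0.
  set (e1 := Rmin eta dl / 2).
  assert (He1 : 0 < e1 /\ e1 < eta /\ e1 < dl).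
  { unfold e1, Rmin; destruct Rle_dec; lra. }
  set (t1 := t0 + e1). set (tm := t0 + e1 / 2).
  assert (Hder : forall x, t0 <= x <= t1 -> is_derive g x (Derive g x)).
  { intros x Hx. apply Derive_correct. apply Hex. unfold t1 in Hx. rewrite Rabs_pos_eq; lra. }
  assert (Hcont : forall x, t0 <= x <= t1 -> continuity_pt g x).
  { intros x Hx. pose proof (Hder x Hx) as Hd'. apply is_derive_Reals in Hd'.
    apply (derivable_continuous_pt g x (exist _ _ Hd')). }
  destruct (MVT_gen g tm t1 (Derive g)) as [c1 [Hc1 E1]].
  { intros x Hx. apply Hder. unfold Rmin, Rmax in Hx; destruct Rle_dec; unfold tm, t1 in *; lra. }
  { intros x Hx. apply Hcont. unfold Rmin, Rmax in Hx; destruct Rle_dec; unfold tm, t1 in *; lra. }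
  destruct (MVT_gen g t0 tm (Derive g)) as [c2 [Hc2 E2]].
  { intros x Hx. apply Hder. unfold Rmin, Rmax in Hx; destruct Rle_dec; unfold tm, t1 in *; lra. }
  { intros x Hx. apply Hcont. unfold Rmin, Rmax in Hx; destruct Rle_dec; unfold tm, t1 in *; lra. }
  assert (Htm : t0 < tm < t1) by (unfold tm, t1; lra).
  rewrite Rmin_left in Hc1, Hc2 by lra. rewrite Rmax_right in Hc1, Hc2 by lra.
  assert (D1 : Derive g c1 < 0).
  { replace c1 with (t0 + (c1 - t0)) by ring. apply Hneg'; unfold t1 in *; lra. }
  assert (D2' : Derive g c2 <= 0).
  { destruct (Req_dec c2 t0) as [->|Hne]; [lra|].
    replace c2 with (t0 + (c2 - t0)) by ring. left; apply Hneg'; unfold tm in *; lra. }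
  assert (g t1 - g tm < 0) by (rewrite E1; apply Rmult_neg_pos; lra).
  assert (g tm - g t0 <= 0).
  { rewrite E2. apply Rmult_le_0_r; lra. }
  assert (g t0 <= g t1) by (apply Hm; unfold t1; rewrite Rabs_pos_eq; lra).
  lra.
Qed.

Definition rad (X Y : R) := sqrt (X ^ 2 + Y ^ 2).
Definition ang (X Y : R) := 2 * atan (Y / (rad X Y + X)).
Definition Af (b X Y : R) := Rpower (rad X Y) b * cos (b * ang X Y).
Definition Bf (b X Y : R) := Rpower (rad X Y) b * sin (b * ang X Y).

Lemma rad_sq X Y : rad X Y ^ 2 = X ^ 2 + Y ^ 2.
Proof. unfold rad. rewrite pow2_sqrt; nra. Qed.
Lemma rad_ge X Y : Rabs X <= rad X Y.
Proof. unfold rad. rewrite <- sqrt_Rsqr_abs. apply sqrt_le_1_alt. unfold Rsqr. nra. Qed.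
Lemma rad_nonneg X Y : 0 <= rad X Y.
Proof. apply sqrt_pos. Qed.
Lemma rad_pos X Y : 0 < rad X Y + X -> 0 < rad X Y.
Proof. intros H. pose proof (rad_ge X Y). unfold Rabs in H0; destruct Rcase_abs; lra. Qed.

Lemma cos_sin_ang X Y : 0 < rad X Y + X ->
  cos (ang X Y) = X / rad X Y /\ sin (ang X Y) = Y / rad X Y.
Proof.
  intros H. pose proof (rad_pos _ _ H) as Hr. pose proof (rad_sq X Y) as Hs.
  set (r := rad X Y) in *. unfold ang. fold r.
  set (t := Y / (r + X)).
  assert (Ht : 1 + t² = 2 * r / (r + X)).
  { unfold t, Rsqr. field_simplify_eq; [|lra]. nsatz. }
  assert (Hq : 0 < 1 + t²) by (pose proof (Rle_0_sqr t); lra).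
  pose proof (sqrt_lt_R0 _ Hq) as Hsq. pose proof (sqrt_sqrt _ (Rlt_le _ _ Hq)) as Hss.
  replace (2 * atan t) with (atan t + atan t) by ring.
  rewrite cos_plus, sin_plus, cos_atan, sin_atan.
  set (q := sqrt (1 + t²)) in *.
  split.
  - replace (1 / q * (1 / q) - t / q * (t / q)) with ((1 - t²) / (q * q)) by (unfold Rsqr; field; intro; lra).
    rewrite Hss, Ht. unfold t, Rsqr. field_simplify_eq; [|lra]. lra.
  - replace (t / q * (1 / q) + 1 / q * (t / q)) with ((2 * t) / (q * q)) by (field; intro; lra).
    rewrite Hss, Ht. unfold t. field. lra.
Qed.

Lemma d_rad X Y a c : 0 < X ^ 2 + Y ^ 2 ->
  is_derive (fun t => rad (X + a * t) (Y + c * t)) 0 ((X * a + Y * c) / rad X Y).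
Proof.
  intros H. unfold rad. auto_derive.
  - replace (X + a * 0) with X by ring. replace (Y + c * 0) with Y by ring. nra.
  - replace (X + a * 0) with X by ring. replace (Y + c * 0) with Y by ring.
    assert (0 < sqrt (X ^ 2 + Y ^ 2)) by (apply sqrt_lt_R0; auto).
    replace (X * (X * 1) + Y * (Y * 1)) with (X ^ 2 + Y ^ 2) by ring. field. lra.
Qed.

Lemma d_ang X Y a c : 0 < rad X Y + X ->
  is_derive (fun t => ang (X + a * t) (Y + c * t)) 0 ((X * c - Y * a) / rad X Y ^ 2).
Proof.
  intros H. pose proof (rad_pos _ _ H) as Hr. pose proof (rad_sq X Y) as Hs.
  assert (HXY : 0 < X ^ 2 + Y ^ 2) by (rewrite <- Hs; nra).
  unfold ang, rad in *. auto_derive.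
  - replace (X + a * 0) with X by ring. replace (Y + c * 0) with Y by ring.
    replace (X * (X * 1) + Y * (Y * 1)) with (X ^ 2 + Y ^ 2) by ring. repeat split; auto; lra.
  - replace (X + a * 0) with X by ring. replace (Y + c * 0) with Y by ring.
    replace (X * (X * 1) + Y * (Y * 1)) with (X ^ 2 + Y ^ 2) by ring.
    set (r := sqrt (X ^ 2 + Y ^ 2)) in *.
    assert (0 < 1 + Y / (r + X) * (Y / (r + X))) by (pose proof (Rle_0_sqr (Y / (r + X))); unfold Rsqr in *; lra).
    clearbody r. field_simplify_eq.
    + assert (HY2 : Y ^ 2 = r ^ 2 - X ^ 2) by lra.
      replace (Y ^ 3) with (Y * Y ^ 2) by ring. rewrite HY2. ring.
    + repeat split; try (intro; nra).
Qed.

Lemma isd_mult (f g : R -> R) (x df dg : R) : is_derive f x df -> is_derive g x dg ->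
  is_derive (fun t => f t * g t) x (df * g x + f x * dg).
Proof. rewrite !is_derive_Reals. intros. exact (derivable_pt_lim_mult f g x df dg H H0). Qed.
Lemma isd_comp (f g : R -> R) x y dg df : is_derive g x dg -> g x = y -> is_derive f y df ->
  is_derive (fun t => f (g t)) x (df * dg).
Proof. intros H1 <- H2. rewrite is_derive_Reals in *. exact (derivable_pt_lim_comp g f x dg df H1 H2). Qed.
Lemma isd_eq (f : R -> R) (x l1 l2 : R) : is_derive f x l1 -> l1 = l2 -> is_derive f x l2.
Proof. intros H <-; exact H. Qed.
Lemma isd_Rpower y b : 0 < y -> is_derive (fun x => Rpower x b) y (b * Rpower y (b - 1)).
Proof. intros. apply is_derive_Reals. apply derivable_pt_lim_power; auto. Qed.
Lemma isd_cos y : is_derive cos y (- sin y).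
Proof. apply is_derive_cos. Qed.
Lemma isd_sin y : is_derive sin y (cos y).
Proof. apply is_derive_sin. Qed.
Lemma isd_scal (f : R -> R) (x k df : R) : is_derive f x df -> is_derive (fun t => k * f t) x (k * df).
Proof. apply is_derive_scal. Qed.

Lemma Rpower_m1 r b : 0 < r -> Rpower r b = Rpower r (b - 1) * r.
Proof. intros. replace b with ((b - 1) + 1) at 1 by ring. rewrite Rpower_plus, Rpower_1; auto. Qed.

Lemma d_AfBf b X Y a c : 0 < rad X Y + X ->
  is_derive (fun t => Af b (X + a * t) (Y + c * t)) 0 (b * (a * Af (b - 1) X Y - c * Bf (b - 1) X Y)) /\
  is_derive (fun t => Bf b (X + a * t) (Y + c * t)) 0 (b * (c * Af (b - 1) X Y + a * Bf (b - 1) X Y)).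
Proof.
  intros H. pose proof (rad_pos _ _ H) as Hr. pose proof (rad_sq X Y) as Hs.
  assert (HXY : 0 < X ^ 2 + Y ^ 2) by (rewrite <- Hs; nra).
  pose proof (d_rad X Y a c HXY) as DR. pose proof (d_ang X Y a c H) as DA.
  assert (E0 : (fun t => rad (X + a * t) (Y + c * t)) 0 = rad X Y).
  { simpl. f_equal; ring. }
  assert (E1 : (fun t => ang (X + a * t) (Y + c * t)) 0 = ang X Y).
  { simpl. f_equal; ring. }
  pose proof (isd_comp (fun x => Rpower x b) _ 0 _ _ _ DR E0 (isd_Rpower _ b Hr)) as P1.
  pose proof (isd_scal _ 0 b _ DA) as DA'.
  assert (E2 : (fun t => b * ang (X + a * t) (Y + c * t)) 0 = b * ang X Y) by (simpl; rewrite <- E1; reflexivity).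
  pose proof (isd_comp cos _ 0 _ _ _ DA' E2 (isd_cos _)) as P2.
  pose proof (isd_comp sin _ 0 _ _ _ DA' E2 (isd_sin _)) as P3.
  pose proof (isd_mult _ _ 0 _ _ P1 P2) as Q1.
  pose proof (isd_mult _ _ 0 _ _ P1 P3) as Q2.
  simpl in Q1, Q2. rewrite E0 in Q1, Q2. 
  replace (ang (X + a * 0) (Y + c * 0)) with (ang X Y) in Q1, Q2 by (f_equal; ring).
  destruct (cos_sin_ang X Y H) as [Hc Hsn].
  unfold Af, Bf. set (r := rad X Y) in *. set (th := ang X Y) in *.
  assert (Ec : cos ((b - 1) * th) = cos (b * th) * (X / r) + sin (b * th) * (Y / r)).
  { replace ((b - 1) * th) with (b * th - th) by ring. rewrite cos_minus, Hc, Hsn. ring. }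
  assert (Es : sin ((b - 1) * th) = sin (b * th) * (X / r) - cos (b * th) * (Y / r)).
  { replace ((b - 1) * th) with (b * th - th) by ring. rewrite sin_minus, Hc, Hsn. ring. }
  rewrite (Rpower_m1 r b Hr) in Q1, Q2.
  split.
  - eapply isd_eq; [exact Q1|]. rewrite Ec, Es. field. lra.
  - eapply isd_eq; [exact Q2|]. rewrite Ec, Es. field. lra.
Qed.

Definition FX (P e q : pt) := fst e * (fst q - fst P) + snd e * (snd q - snd P).
Definition FY (P e q : pt) := - snd e * (fst q - fst P) + fst e * (snd q - snd P).
Definition Ac (P e : pt) b (q : pt) := Af b (FX P e q) (FY P e q).
Definition Bc (P e : pt) b (q : pt) := Bf b (FX P e q) (FY P e q).
Definition RegC (P e q : pt) := 0 < rad (FX P e q) (FY P e q) + FX P e q.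

Lemma shift_derive (g : R -> R) x1 l : is_derive g 0 l -> is_derive (fun t => g (t - x1)) x1 l.
Proof.
  intros H. replace l with (l * 1) by ring. apply (isd_comp g (fun t => t - x1) x1 0); [|simpl; ring|exact H].
  apply is_derive_Reals. replace 1 with (1 - 0) by ring.
  apply derivable_pt_lim_minus; [apply derivable_pt_lim_id|apply derivable_pt_lim_const].
Qed.

Lemma dAc_x P e b q : RegC P e q ->
  is_derive (fun t => Ac P e b (t, snd q)) (fst q) (b * (fst e * Ac P e (b-1) q + snd e * Bc P e (b-1) q)) /\
  is_derive (fun t => Bc P e b (t, snd q)) (fst q) (b * (fst e * Bc P e (b-1) q - snd e * Ac P e (b-1) q)).
Proof.
  intros H. destruct (d_AfBf b (FX P e q) (FY P e q) (fst e) (- snd e) H) as [H1 H2].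
  split.
  - eapply is_derive_ext; [|apply (shift_derive (fun h => Af b (FX P e q + fst e * h) (FY P e q + - snd e * h)) (fst q)); eapply isd_eq; [exact H1|]].
    + intros t. unfold Ac, FX, FY; simpl. f_equal; ring.
    + unfold Ac, Bc. ring.
  - eapply is_derive_ext; [|apply (shift_derive (fun h => Bf b (FX P e q + fst e * h) (FY P e q + - snd e * h)) (fst q)); eapply isd_eq; [exact H2|]].
    + intros t. unfold Bc, FX, FY; simpl. f_equal; ring.
    + unfold Ac, Bc. ring.
Qed.

Lemma dAc_y P e b q : RegC P e q ->
  is_derive (fun t => Ac P e b (fst q, t)) (snd q) (b * (snd e * Ac P e (b-1) q - fst e * Bc P e (b-1) q)) /\
  is_derive (fun t => Bc P e b (fst q, t)) (snd q) (b * (fst e * Ac P e (b-1) q + snd e * Bc P e (b-1) q)).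
Proof.
  intros H. destruct (d_AfBf b (FX P e q) (FY P e q) (snd e) (fst e) H) as [H1 H2].
  split.
  - eapply is_derive_ext; [|apply (shift_derive (fun h => Af b (FX P e q + snd e * h) (FY P e q + fst e * h)) (snd q)); eapply isd_eq; [exact H1|]].
    + intros t. unfold Ac, FX, FY; simpl. f_equal; ring.
    + unfold Ac, Bc. ring.
  - eapply is_derive_ext; [|apply (shift_derive (fun h => Bf b (FX P e q + snd e * h) (FY P e q + fst e * h)) (snd q)); eapply isd_eq; [exact H2|]].
    + intros t. unfold Bc, FX, FY; simpl. f_equal; ring.
    + unfold Ac, Bc. ring.
Qed.

Lemma isd_plus (f g : R -> R) (x df dg : R) : is_derive f x df -> is_derive g x dg ->
  is_derive (fun t => f t + g t) x (df + dg).
Proof. rewrite !is_derive_Reals. intros. exact (derivable_pt_lim_plus f g x df dg H H0). Qed.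
Lemma isd_minus (f g : R -> R) (x df dg : R) : is_derive f x df -> is_derive g x dg ->
  is_derive (fun t => f t - g t) x (df - dg).
Proof. rewrite !is_derive_Reals. intros. exact (derivable_pt_lim_minus f g x df dg H H0). Qed.


Definition Wb (P e : pt) al rho (q : pt) :=
  2 / Rpower rho al * Ac P e al q - / Rpower rho (2 * al) * Ac P e (2 * al) q.
Definition hb (P : pt) k (q : pt) := 1 - k ^ 2 * ((fst q - fst P) ^ 2 + (snd q - snd P) ^ 2) / 2.
Definition Phib P e al rho k M q := 2 * M * (Wb P e al rho q * hb P k q).

Definition Wbx P e al rho q :=
  2 / Rpower rho al * (al * (fst e * Ac P e (al-1) q + snd e * Bc P e (al-1) q))
  - / Rpower rho (2 * al) * (2 * al * (fst e * Ac P e (2*al-1) q + snd e * Bc P e (2*al-1) q)).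
Definition Wby P e al rho q :=
  2 / Rpower rho al * (al * (snd e * Ac P e (al-1) q - fst e * Bc P e (al-1) q))
  - / Rpower rho (2 * al) * (2 * al * (snd e * Ac P e (2*al-1) q - fst e * Bc P e (2*al-1) q)).
Definition hbx (P : pt) k (q : pt) := - k ^ 2 * (fst q - fst P).
Definition hby (P : pt) k (q : pt) := - k ^ 2 * (snd q - snd P).
Definition Phibx P e al rho k M q := 2 * M * (Wbx P e al rho q * hb P k q + Wb P e al rho q * hbx P k q).
Definition Phiby P e al rho k M q := 2 * M * (Wby P e al rho q * hb P k q + Wb P e al rho q * hby P k q).

Definition Wbxx P e al rho q :=
  2 / Rpower rho al * (al * (al - 1) * ((fst e ^ 2 - snd e ^ 2) * Ac P e (al-2) q + 2 * fst e * snd e * Bc P e (al-2) q))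
  - / Rpower rho (2 * al) * (2 * al * (2 * al - 1) * ((fst e ^ 2 - snd e ^ 2) * Ac P e (2*al-2) q + 2 * fst e * snd e * Bc P e (2*al-2) q)).
Definition Wbyy P e al rho q :=
  2 / Rpower rho al * (al * (al - 1) * ((snd e ^ 2 - fst e ^ 2) * Ac P e (al-2) q - 2 * fst e * snd e * Bc P e (al-2) q))
  - / Rpower rho (2 * al) * (2 * al * (2 * al - 1) * ((snd e ^ 2 - fst e ^ 2) * Ac P e (2*al-2) q - 2 * fst e * snd e * Bc P e (2*al-2) q)).
Definition Phibxx P e al rho k M q := 2 * M * (Wbxx P e al rho q * hb P k q + 2 * (Wbx P e al rho q * hbx P k q) + Wb P e al rho q * (- k ^ 2)).
Definition Phibyy P e al rho k M q := 2 * M * (Wbyy P e al rho q * hb P k q + 2 * (Wby P e al rho q * hby P k q) + Wb P e al rho q * (- k ^ 2)).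

Lemma d_hb_x P k q : is_derive (fun t => hb P k (t, snd q)) (fst q) (hbx P k q).
Proof. unfold hb, hbx. simpl. auto_derive; auto. field. Qed.
Lemma d_hb_y P k q : is_derive (fun t => hb P k (fst q, t)) (snd q) (hby P k q).
Proof. unfold hb, hby. simpl. auto_derive; auto. field. Qed.
Lemma d_hbx_x P k q : is_derive (fun t => hbx P k (t, snd q)) (fst q) (- k ^ 2).
Proof. unfold hbx. simpl. auto_derive; auto. field. Qed.
Lemma d_hby_y P k q : is_derive (fun t => hby P k (fst q, t)) (snd q) (- k ^ 2).
Proof. unfold hby. simpl. auto_derive; auto. field. Qed.

Lemma d_Wb_x P e al rho q : RegC P e q -> is_derive (fun t => Wb P e al rho (t, snd q)) (fst q) (Wbx P e al rho q).
Proof.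
  intros H. destruct (dAc_x P e al q H) as [A1 _]. destruct (dAc_x P e (2 * al) q H) as [A2 _].
  unfold Wb. eapply isd_eq; [apply isd_minus; apply isd_scal; [exact A1|exact A2]|].
  unfold Wbx. ring.
Qed.
Lemma d_Wb_y P e al rho q : RegC P e q -> is_derive (fun t => Wb P e al rho (fst q, t)) (snd q) (Wby P e al rho q).
Proof.
  intros H. destruct (dAc_y P e al q H) as [A1 _]. destruct (dAc_y P e (2 * al) q H) as [A2 _].
  unfold Wb. eapply isd_eq; [apply isd_minus; apply isd_scal; [exact A1|exact A2]|].
  unfold Wby. ring.
Qed.

Lemma d_Wbx_x P e al rho q : RegC P e q -> is_derive (fun t => Wbx P e al rho (t, snd q)) (fst q) (Wbxx P e al rho q).
Proof.
  intros H. destruct (dAc_x P e (al-1) q H) as [A1 B1]. destruct (dAc_x P e (2 * al - 1) q H) as [A2 B2].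
  unfold Wbx. eapply isd_eq.
  - apply isd_minus; apply isd_scal; apply isd_scal; apply isd_plus; apply isd_scal; eassumption.
  - unfold Wbxx. replace (al - 1 - 1) with (al - 2) by ring. replace (2 * al - 1 - 1) with (2 * al - 2) by ring. ring.
Qed.
Lemma d_Wby_y P e al rho q : RegC P e q -> is_derive (fun t => Wby P e al rho (fst q, t)) (snd q) (Wbyy P e al rho q).
Proof.
  intros H. destruct (dAc_y P e (al-1) q H) as [A1 B1]. destruct (dAc_y P e (2 * al - 1) q H) as [A2 B2].
  unfold Wby. eapply isd_eq.
  - apply isd_minus; apply isd_scal; apply isd_scal; apply isd_minus; apply isd_scal; eassumption.
  - unfold Wbyy. replace (al - 1 - 1) with (al - 2) by ring. replace (2 * al - 1 - 1) with (2 * al - 2) by ring. ring.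
Qed.

Lemma d_Phib_x P e al rho k M q : RegC P e q ->
  is_derive (fun t => Phib P e al rho k M (t, snd q)) (fst q) (Phibx P e al rho k M q).
Proof.
  intros H. unfold Phib. eapply isd_eq; [apply isd_scal; apply isd_mult; [apply d_Wb_x; auto| apply d_hb_x]|].
  unfold Phibx. simpl. reflexivity.
Qed.
Lemma d_Phib_y P e al rho k M q : RegC P e q ->
  is_derive (fun t => Phib P e al rho k M (fst q, t)) (snd q) (Phiby P e al rho k M q).
Proof.
  intros H. unfold Phib. eapply isd_eq; [apply isd_scal; apply isd_mult; [apply d_Wb_y; auto| apply d_hb_y]|].
  unfold Phiby. simpl. reflexivity.
Qed.
Lemma d_Phibx_x P e al rho k M q : RegC P e q ->
  is_derive (fun t => Phibx P e al rho k M (t, snd q)) (fst q) (Phibxx P e al rho k M q).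
Proof.
  intros H. destruct q as [q1 q2]. unfold Phibx. eapply isd_eq.
  - apply isd_scal. apply isd_plus.
    + apply isd_mult; [apply d_Wbx_x; auto| apply d_hb_x].
    + apply isd_mult; [apply d_Wb_x; auto| apply d_hbx_x].
  - unfold Phibxx. simpl. ring.
Qed.
Lemma d_Phiby_y P e al rho k M q : RegC P e q ->
  is_derive (fun t => Phiby P e al rho k M (fst q, t)) (snd q) (Phibyy P e al rho k M q).
Proof.
  intros H. destruct q as [q1 q2]. unfold Phiby. eapply isd_eq.
  - apply isd_scal. apply isd_plus.
    + apply isd_mult; [apply d_Wby_y; auto| apply d_hb_y].
    + apply isd_mult; [apply d_Wb_y; auto| apply d_hby_y].
  - unfold Phibyy. simpl. ring.
Qed.

Lemma AB_polar P e b q : RegC P e q ->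
  Ac P e b q = Rpower (rad (FX P e q) (FY P e q)) b * cos (b * ang (FX P e q) (FY P e q)) /\
  Bc P e b q = Rpower (rad (FX P e q) (FY P e q)) b * sin (b * ang (FX P e q) (FY P e q)).
Proof. intros; split; reflexivity. Qed.

Lemma radial_id P e b q : RegC P e q ->
  FX P e q * Ac P e (b - 1) q - FY P e q * Bc P e (b - 1) q = Ac P e b q.
Proof.
  intros H. unfold RegC in H. pose proof (rad_pos _ _ H) as Hr.
  destruct (cos_sin_ang _ _ H) as [Hc Hs].
  unfold Ac, Bc, Af, Bf. set (r := rad (FX P e q) (FY P e q)) in *.
  set (th := ang (FX P e q) (FY P e q)) in *.
  set (X := FX P e q) in *. set (Y := FY P e q) in *.
  assert (HX : X = r * cos th) by (rewrite Hc; field; lra).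
  assert (HY : Y = r * sin th) by (rewrite Hs; field; lra).
  rewrite HX, HY, (Rpower_m1 r b Hr).
  replace (b * th) with ((b - 1) * th + th) by ring. rewrite cos_plus. ring.
Qed.

Lemma double_id P e al q : RegC P e q ->
  Ac P e (2 * al) q = Ac P e al q ^ 2 - Bc P e al q ^ 2.
Proof.
  intros H. unfold Ac, Bc, Af, Bf.
  replace (2 * al) with (al + al) by ring. rewrite Rpower_plus.
  replace ((al + al) * ang (FX P e q) (FY P e q)) with (ang (FX P e q) (FY P e q) * al + ang (FX P e q) (FY P e q) * al) by ring.
  rewrite cos_plus. replace (al * ang (FX P e q) (FY P e q)) with (ang (FX P e q) (FY P e q) * al) by ring. ring.
Qed.

Lemma rad_FXFY P e q : fst e ^ 2 + snd e ^ 2 = 1 ->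
  rad (FX P e q) (FY P e q) ^ 2 = (fst q - fst P) ^ 2 + (snd q - snd P) ^ 2.
Proof.
  intros He. rewrite rad_sq. unfold FX, FY.
  replace ((fst q - fst P) ^ 2 + (snd q - snd P) ^ 2) with (((fst q - fst P) ^ 2 + (snd q - snd P) ^ 2) * 1) by ring.
  rewrite <- He. ring.
Qed.

Lemma Phi_ineq P e al rho k M q : RegC P e q -> fst e ^ 2 + snd e ^ 2 = 1 -> 0 < rho -> 0 < al -> 0 <= M ->
  0 <= cos (al * ang (FX P e q) (FY P e q)) -> rad (FX P e q) (FY P e q) <= rho ->
  Phibxx P e al rho k M q + Phibyy P e al rho k M q + k ^ 2 * Phib P e al rho k M q <= 0.
Proof.
  intros H He Hrho Hal HM Hcos Hle.
  pose proof (radial_id P e al q H) as R1. pose proof (radial_id P e (2 * al) q H) as R2.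
  pose proof (double_id P e al q H) as D2. pose proof (rad_FXFY P e q He) as Hd.
  pose proof (rad_pos _ _ H) as Hr.
  set (u := Rpower rho al).
  assert (Hu : 0 < u) by (unfold u, Rpower; apply exp_pos).
  assert (Hu2 : Rpower rho (2 * al) = u ^ 2).
  { unfold u. replace (2 * al) with (al + al) by ring. rewrite Rpower_plus. ring. }
  set (a := Ac P e al q / u). set (b := Bc P e al q / u).
  assert (Ha0 : 0 <= a).
  { unfold a, Ac, Af. apply Rmult_le_pos; [|left; apply Rinv_0_lt_compat; auto].
    apply Rmult_le_pos; auto. unfold Rpower; left; apply exp_pos. }
  assert (Ha1 : a <= 1).
  { unfold a, Ac, Af. apply (Rmult_le_reg_r u); auto. field_simplify; [|lra].
    apply Rle_trans with (Rpower (rad (FX P e q) (FY P e q)) al * 1).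
    - apply Rmult_le_compat_l; [unfold Rpower; left; apply exp_pos| apply COS_bound].
    - rewrite Rmult_1_r. unfold u. apply Rle_Rpower_l; lra. }
  assert (EW : Wb P e al rho q = 2 * a - (a ^ 2 - b ^ 2)).
  { unfold Wb, a, b. fold u. rewrite Hu2, D2. clear -Hu. clearbody u. generalize (Ac P e al q) (Bc P e al q). intros A B. revert A B. generalize u Hu. clear. intros. field. lra. }
  assert (Erad : (fst q - fst P) * Wbx P e al rho q + (snd q - snd P) * Wby P e al rho q
                 = 2 * al * a - 2 * al * (a ^ 2 - b ^ 2)).
  { transitivity (2 / u * (al * Ac P e al q) - / Rpower rho (2 * al) * (2 * al * Ac P e (2 * al) q)).
    - rewrite <- R1, <- R2. unfold Wbx, Wby, FX, FY. fold u. ring.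
    - rewrite Hu2, D2. unfold a, b. field. lra. }
  assert (Elap : Wbxx P e al rho q + Wbyy P e al rho q = 0) by (unfold Wbxx, Wbyy; ring).
  unfold Phibxx, Phibyy, Phib.
  replace (2 * M * (Wbxx P e al rho q * hb P k q + 2 * (Wbx P e al rho q * hbx P k q) + Wb P e al rho q * - k ^ 2) +
   2 * M * (Wbyy P e al rho q * hb P k q + 2 * (Wby P e al rho q * hby P k q) + Wb P e al rho q * - k ^ 2) +
   k ^ 2 * (2 * M * (Wb P e al rho q * hb P k q)))
   with (2 * M * ((Wbxx P e al rho q + Wbyy P e al rho q) * hb P k q
      - 2 * k ^ 2 * ((fst q - fst P) * Wbx P e al rho q + (snd q - snd P) * Wby P e al rho q)
      - 2 * k ^ 2 * Wb P e al rho q + k ^ 2 * Wb P e al rho q * hb P k q)) by (unfold hbx, hby; ring).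
  rewrite Elap, Erad, EW. unfold hb. rewrite <- Hd.
  set (r := rad (FX P e q) (FY P e q)).
  apply Rmult_le_0_l; [lra|].
  assert (HW : 0 <= 2 * a - (a ^ 2 - b ^ 2)) by nra.
  assert (0 <= k ^ 2) by (apply pow2_ge_0).
  assert (0 <= k ^ 2 * r ^ 2) by (apply Rmult_le_pos; apply pow2_ge_0).
  assert (0 <= al * a * (1 - a)) by (apply Rmult_le_pos; [apply Rmult_le_pos|]; lra).
  assert (0 <= b ^ 2) by apply pow2_ge_0.
  assert (0 <= k ^ 2 * (4 * (al * a * (1 - a)) + 4 * al * b ^ 2 + (2 * a - (a ^ 2 - b ^ 2)))).
  { apply Rmult_le_pos; auto. assert (0 <= al * b ^ 2) by (apply Rmult_le_pos; lra). lra. }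
  assert (0 <= k ^ 2 * (k ^ 2 * r ^ 2) * (2 * a - (a ^ 2 - b ^ 2))) by (apply Rmult_le_pos; [apply Rmult_le_pos|]; auto).
  nra.
Qed.

Definition Tp (P e : pt) (s p : R) : pt :=
  (fst P + s * (fst e * cos p - snd e * sin p), snd P + s * (snd e * cos p + fst e * sin p)).

Lemma FX_Tp P e s p : fst e ^ 2 + snd e ^ 2 = 1 -> FX P e (Tp P e s p) = s * cos p.
Proof. intros He. unfold FX, Tp; simpl. replace (s * cos p) with (s * cos p * 1) by ring. rewrite <- He. ring. Qed.
Lemma FY_Tp P e s p : fst e ^ 2 + snd e ^ 2 = 1 -> FY P e (Tp P e s p) = s * sin p.
Proof. intros He. unfold FY, Tp; simpl. replace (s * sin p) with (s * sin p * 1) by ring. rewrite <- He. ring. Qed.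

Lemma rad_polar s p : 0 <= s -> rad (s * cos p) (s * sin p) = s.
Proof.
  intros Hs. unfold rad. replace ((s * cos p) ^ 2 + (s * sin p) ^ 2) with (s ^ 2) .
  - rewrite <- (sqrt_pow2 s Hs) at 2. reflexivity.
  - pose proof (sin2_cos2 p). unfold Rsqr in H. nra.
Qed.

Lemma Rabs_sin_le_pos x : 0 <= x -> Rabs (sin x) <= x.
Proof.
  intros H. destruct (Req_dec x 0) as [->|Hn]; [rewrite sin_0, Rabs_R0; lra|].
  pose proof (sin_lt_x x ltac:(lra)). pose proof (SIN_bound x). pose proof PI2_1.
  destruct (Rle_or_lt x 1).
  - pose proof (sin_ge_0 x H ltac:(lra)). rewrite Rabs_pos_eq; lra.
  - unfold Rabs; destruct Rcase_abs; lra.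
Qed.
Lemma Rabs_sin_le x : Rabs (sin x) <= Rabs x.
Proof.
  destruct (Rle_or_lt 0 x).
  - rewrite (Rabs_pos_eq x H). apply Rabs_sin_le_pos; auto.
  - assert (H0 : Rabs (sin (-x)) <= -x) by (apply Rabs_sin_le_pos; lra). rewrite sin_neg, Rabs_Ropp in H0. rewrite (Rabs_left x); lra.
Qed.

Lemma ang_polar s p : 0 < s -> - PI < p < PI -> ang (s * cos p) (s * sin p) = p.
Proof.
  intros Hs Hp. pose proof Hp as [Hp1 Hp2]. unfold ang. rewrite rad_polar by lra.
  assert (Hc2 : 0 < cos (p / 2)) by (apply cos_gt_0; lra).
  assert (E : s * sin p / (s + s * cos p) = tan (p / 2)).
  { replace p with (2 * (p / 2)) at 1 2 by field. rewrite sin_2a, cos_2a_cos. unfold tan.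
    field. split; [apply Rgt_not_eq; lra|]. assert (0 < s * (cos (p / 2) * cos (p / 2))) by (apply Rmult_lt_0_compat; nra). apply Rgt_not_eq. nra. }
  rewrite E, atan_tan by (split; lra). field.
Qed.

Lemma RegC_Tp P e s p : fst e ^ 2 + snd e ^ 2 = 1 -> 0 < s -> - PI < p < PI -> RegC P e (Tp P e s p).
Proof.
  intros He Hs Hp. pose proof Hp as [Hp1 Hp2]. unfold RegC. rewrite FX_Tp, FY_Tp, rad_polar by (auto; lra).
  assert (cos p > -1).
  { destruct (Rle_or_lt 0 p).
    - assert (cos p > cos PI) by (apply cos_decreasing_1; lra). rewrite cos_PI in H0; lra.
    - assert (cos (-p) > cos PI) by (apply cos_decreasing_1; lra). rewrite cos_neg, cos_PI in H0; lra. }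
  nra.
Qed.

Lemma Ac_Tp P e b s p : fst e ^ 2 + snd e ^ 2 = 1 -> 0 < s -> - PI < p < PI ->
  Ac P e b (Tp P e s p) = Rpower s b * cos (b * p) /\ Bc P e b (Tp P e s p) = Rpower s b * sin (b * p).
Proof.
  intros He Hs Hp. unfold Ac, Bc, Af, Bf. rewrite FX_Tp, FY_Tp, rad_polar, ang_polar by (auto; lra). auto.
Qed.

Lemma dist2_Tp P e s p : fst e ^ 2 + snd e ^ 2 = 1 -> 0 <= s -> dist2 (Tp P e s p) P = s.
Proof.
  intros He Hs. pose proof (rad_polar s p Hs) as Hr; unfold rad in Hr.
  unfold dist2, Tp; cbn [fst snd]. transitivity (sqrt ((s * cos p) ^ 2 + (s * sin p) ^ 2)); [|exact Hr]. f_equal.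
  replace ((s * cos p) ^ 2 + (s * sin p) ^ 2) with (((s * cos p) ^ 2 + (s * sin p) ^ 2) * 1) by ring.
  rewrite <- He. ring.
Qed.

Lemma Tp_0 P e p : Tp P e 0 p = P.
Proof. destruct P; unfold Tp; simpl; f_equal; ring. Qed.

Lemma sq_of_sqrt x s : 0 <= x -> sqrt x = s -> x = s ^ 2.
Proof. intros H <-. rewrite pow2_sqrt; auto. Qed.

Definition pw (x b : R) := if Rlt_dec 0 x then Rpower x b else 0.
Definition Wp al rho s p := 2 * pw (s / rho) al * cos (al * p) - pw (s / rho) (2 * al) * cos (2 * al * p).
Definition hp k s := 1 - k ^ 2 * s ^ 2 / 2.

Lemma Rpower_inv x y : 0 < x -> Rpower (/ x) y = / Rpower x y.
Proof. intros. unfold Rpower. rewrite ln_Rinv by auto. rewrite <- exp_Ropp. f_equal; ring. Qed.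

Lemma Rpower_div x y b : 0 < x -> 0 < y -> Rpower (x / y) b = Rpower x b / Rpower y b.
Proof.
  intros. unfold Rdiv. rewrite <- Rpower_mult_distr by (auto; apply Rinv_0_lt_compat; auto).
  rewrite Rpower_inv by auto. reflexivity.
Qed.

Lemma Phib_Tp P e al rho k M s p : fst e ^ 2 + snd e ^ 2 = 1 -> 0 < s -> - PI < p < PI -> 0 < rho ->
  Phib P e al rho k M (Tp P e s p) = 2 * M * Wp al rho s p * hp k s /\ hb P k (Tp P e s p) = hp k s.
Proof.
  intros He Hs Hp Hr.
  assert (Hh : hb P k (Tp P e s p) = hp k s).
  { unfold hb, hp. pose proof (dist2_Tp P e s p He (Rlt_le _ _ Hs)) as Hd.
    unfold dist2 in Hd. apply sq_of_sqrt in Hd; [|apply Rplus_le_le_0_compat; apply pow2_ge_0]. rewrite Hd. reflexivity. }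
  split; auto. unfold Phib, Wb. rewrite Hh.
  destruct (Ac_Tp P e al s p He Hs Hp) as [A1 _]. destruct (Ac_Tp P e (2 * al) s p He Hs Hp) as [A2 _].
  rewrite A1, A2. unfold Wp, pw. destruct (Rlt_dec 0 (s / rho)); [|exfalso; apply n; apply Rdiv_lt_0_compat; auto].
  rewrite !Rpower_div by auto. field. split; unfold Rpower; apply Rgt_not_eq; apply exp_pos.
Qed.

Lemma sqrt_le_sum x y : sqrt (x ^ 2 + y ^ 2) <= Rabs x + Rabs y.
Proof.
  rewrite <- (sqrt_pow2 (Rabs x + Rabs y)) by (pose proof (Rabs_pos x); pose proof (Rabs_pos y); lra).
  apply sqrt_le_1_alt. rewrite <- (pow2_abs x), <- (pow2_abs y).
  pose proof (Rabs_pos x); pose proof (Rabs_pos y). nra.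
Qed.

Lemma dist2_le_sum a b : dist2 a b <= Rabs (fst a - fst b) + Rabs (snd a - snd b).
Proof. apply sqrt_le_sum. Qed.

Lemma dist2_sym a b : dist2 a b = dist2 b a.
Proof. unfold dist2. f_equal. ring. Qed.

Lemma dist2_triang a b c : dist2 a c <= dist2 a b + dist2 b c.
Proof.
  unfold dist2.
  set (u1 := fst a - fst b). set (u2 := snd a - snd b). set (v1 := fst b - fst c). set (v2 := snd b - snd c).
  replace (fst a - fst c) with (u1 + v1) by (unfold u1, v1; ring).
  replace (snd a - snd c) with (u2 + v2) by (unfold u2, v2; ring).
  assert (H1 : 0 <= u1 ^ 2 + u2 ^ 2) by nra. assert (H2 : 0 <= v1 ^ 2 + v2 ^ 2) by nra.
  pose proof (sqrt_pos (u1 ^ 2 + u2 ^ 2)). pose proof (sqrt_pos (v1 ^ 2 + v2 ^ 2)).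
  rewrite <- (sqrt_pow2 (sqrt (u1 ^ 2 + u2 ^ 2) + sqrt (v1 ^ 2 + v2 ^ 2))) by lra.
  apply sqrt_le_1_alt.
  assert (Hm : sqrt (u1 ^ 2 + u2 ^ 2) * sqrt (v1 ^ 2 + v2 ^ 2) >= u1 * v1 + u2 * v2).
  { rewrite <- sqrt_mult by auto.
    destruct (Rle_or_lt (u1 * v1 + u2 * v2) 0); [pose proof (sqrt_pos ((u1 ^ 2 + u2 ^ 2) * (v1 ^ 2 + v2 ^ 2))); lra|].
    rewrite <- (sqrt_pow2 (u1 * v1 + u2 * v2)) by lra. apply Rle_ge, sqrt_le_1_alt. pose proof (pow2_ge_0 (u1 * v2 - u2 * v1)). nra. }
  replace ((sqrt (u1 ^ 2 + u2 ^ 2) + sqrt (v1 ^ 2 + v2 ^ 2)) ^ 2) with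
    (sqrt (u1 ^ 2 + u2 ^ 2) ^ 2 + sqrt (v1 ^ 2 + v2 ^ 2) ^ 2 + 2 * (sqrt (u1 ^ 2 + u2 ^ 2) * sqrt (v1 ^ 2 + v2 ^ 2))) by ring.
  rewrite !pow2_sqrt by auto. nra.
Qed.

Lemma cos_lip p q : Rabs (cos p - cos q) <= Rabs (p - q).
Proof.
  rewrite form2. pose proof (Rabs_sin_le ((p - q) / 2)). pose proof (SIN_bound ((p + q) / 2)).
  rewrite !Rabs_mult.
  replace (Rabs (-2)) with 2 by (rewrite Rabs_left; lra).
  assert (Rabs (sin ((p + q) / 2)) <= 1) by (unfold Rabs; destruct Rcase_abs; lra).
  assert (Rabs ((p - q) / 2) = Rabs (p - q) / 2) by (unfold Rdiv; rewrite Rabs_mult, (Rabs_right (/2)) by lra; ring).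
  pose proof (Rabs_pos (sin ((p - q) / 2))).
  assert (Rabs (sin ((p - q) / 2)) * Rabs (sin ((p + q) / 2)) <= Rabs (sin ((p - q) / 2))) by nra.
  lra.
Qed.

Lemma sin_lip p q : Rabs (sin p - sin q) <= Rabs (p - q).
Proof.
  replace (sin p - sin q) with (sin p + sin (- q)) by (rewrite sin_neg; ring).
  rewrite form3. replace ((p - - q) / 2) with ((p + q) / 2) by field. replace ((p + - q) / 2) with ((p - q) / 2) by field.
  pose proof (Rabs_sin_le ((p - q) / 2)). pose proof (COS_bound ((p + q) / 2)).
  rewrite !Rabs_mult. rewrite (Rabs_right 2) by lra.
  assert (Rabs (cos ((p + q) / 2)) <= 1) by (unfold Rabs; destruct Rcase_abs; lra).
  assert (Rabs ((p - q) / 2) = Rabs (p - q) / 2) by (unfold Rdiv; rewrite Rabs_mult, (Rabs_right (/2)) by lra; ring).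
  pose proof (Rabs_pos (sin ((p - q) / 2))).
  assert (Rabs (cos ((p + q) / 2)) * Rabs (sin ((p - q) / 2)) <= Rabs (sin ((p - q) / 2))) by nra.
  lra.
Qed.

Lemma Tp_lip P e s p s' p' : fst e ^ 2 + snd e ^ 2 = 1 ->
  dist2 (Tp P e s p) (Tp P e s' p') <= 4 * (Rabs (s - s') + Rabs s' * Rabs (p - p')).
Proof.
  intros He. eapply Rle_trans; [apply dist2_le_sum|]. unfold Tp; cbn [fst snd].
  assert (Hc : Rabs (s * cos p - s' * cos p') <= Rabs (s - s') + Rabs s' * Rabs (p - p')).
  { replace (s * cos p - s' * cos p') with ((s - s') * cos p + s' * (cos p - cos p')) by ring.
    eapply Rle_trans; [apply Rabs_triang|]. rewrite !Rabs_mult.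
    pose proof (COS_bound p). assert (Rabs (cos p) <= 1) by (unfold Rabs; destruct Rcase_abs; lra).
    pose proof (cos_lip p p'). pose proof (Rabs_pos (s - s')). pose proof (Rabs_pos s').
    apply Rplus_le_compat; [nra|]. apply Rmult_le_compat_l; auto. }
  assert (Hs : Rabs (s * sin p - s' * sin p') <= Rabs (s - s') + Rabs s' * Rabs (p - p')).
  { replace (s * sin p - s' * sin p') with ((s - s') * sin p + s' * (sin p - sin p')) by ring.
    eapply Rle_trans; [apply Rabs_triang|]. rewrite !Rabs_mult.
    pose proof (SIN_bound p). assert (Rabs (sin p) <= 1) by (unfold Rabs; destruct Rcase_abs; lra).
    pose proof (sin_lip p p'). pose proof (Rabs_pos (s - s')). pose proof (Rabs_pos s').
    apply Rplus_le_compat; [nra|]. apply Rmult_le_compat_l; auto. }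
  assert (He1 : Rabs (fst e) <= 1).
  { apply Rsqr_incr_0_var; [|lra]. rewrite <- Rsqr_abs. unfold Rsqr. nra. }
  assert (He2 : Rabs (snd e) <= 1).
  { apply Rsqr_incr_0_var; [|lra]. rewrite <- Rsqr_abs. unfold Rsqr. nra. }
  set (A := s * cos p - s' * cos p') in *. set (B := s * sin p - s' * sin p') in *.
  replace (fst P + s * (fst e * cos p - snd e * sin p) - (fst P + s' * (fst e * cos p' - snd e * sin p')))
    with (fst e * A - snd e * B) by (unfold A, B; ring).
  replace (snd P + s * (snd e * cos p + fst e * sin p) - (snd P + s' * (snd e * cos p' + fst e * sin p')))
    with (snd e * A + fst e * B) by (unfold A, B; ring).
  assert (Rabs (fst e * A - snd e * B) <= Rabs A + Rabs B).
  { eapply Rle_trans; [apply Rabs_triang|]. rewrite Rabs_Ropp, !Rabs_mult.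
    pose proof (Rabs_pos A); pose proof (Rabs_pos B). pose proof (Rabs_pos (fst e)); pose proof (Rabs_pos (snd e)). nra. }
  assert (Rabs (snd e * A + fst e * B) <= Rabs A + Rabs B).
  { eapply Rle_trans; [apply Rabs_triang|]. rewrite !Rabs_mult.
    pose proof (Rabs_pos A); pose proof (Rabs_pos B). pose proof (Rabs_pos (fst e)); pose proof (Rabs_pos (snd e)). nra. }
  lra.
Qed.

Lemma mult_close F G e : 0 < e -> exists h, 0 < h /\ forall F' G', Rabs (F' - F) < h -> Rabs (G' - G) < h ->
  Rabs (F' * G' - F * G) < e.
Proof.
  intros He. set (K := Rabs F + Rabs G + 1). assert (HK : 0 < K) by (unfold K; pose proof (Rabs_pos F); pose proof (Rabs_pos G); lra).
  exists (Rmin 1 (e / (2 * K))). split. { apply Rmin_pos; [lra|]. apply Rdiv_lt_0_compat; lra. }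
  intros F' G' H1 H2. pose proof (Rmin_l 1 (e / (2 * K))). pose proof (Rmin_r 1 (e / (2 * K))).
  set (h := Rmin 1 (e / (2 * K))) in *.
  replace (F' * G' - F * G) with ((F' - F) * G' + F * (G' - G)) by ring.
  eapply Rle_lt_trans; [apply Rabs_triang|]. rewrite !Rabs_mult.
  assert (Rabs G' <= Rabs G + 1).
  { replace G' with (G + (G' - G)) by ring. eapply Rle_trans; [apply Rabs_triang|]. lra. }
  pose proof (Rabs_pos (F' - F)). pose proof (Rabs_pos G'). pose proof (Rabs_pos F). pose proof (Rabs_pos (G' - G)).
  assert (Rabs (F' - F) * Rabs G' <= h * (Rabs G + 1)) by (apply Rmult_le_compat; lra).
  assert (Rabs F * Rabs (G' - G) <= Rabs F * h) by (apply Rmult_le_compat_l; lra).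
  assert (h * K <= e / 2).
  { apply Rle_trans with (e / (2 * K) * K). apply Rmult_le_compat_r; lra. right; field; lra. }
  unfold K in *. nra.
Qed.

Lemma inv_close G e : G <> 0 -> 0 < e -> exists h, 0 < h /\ forall G', Rabs (G' - G) < h ->
  Rabs (/ G' - / G) < e.
Proof.
  intros HG He. assert (Ha : 0 < Rabs G) by (apply Rabs_pos_lt; auto).
  exists (Rmin (Rabs G / 2) (e * Rabs G ^ 2 / 2)). split. { apply Rmin_pos; [lra|]. apply Rdiv_lt_0_compat; [|lra]. apply Rmult_lt_0_compat; auto. apply pow_lt; auto. }
  intros G' H1. pose proof (Rmin_l (Rabs G / 2) (e * Rabs G ^ 2 / 2)). pose proof (Rmin_r (Rabs G / 2) (e * Rabs G ^ 2 / 2)).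
  assert (HG' : Rabs G / 2 <= Rabs G').
  { assert (Rabs G <= Rabs G' + Rabs (G' - G)).
    { replace G with (G' + (G - G')) at 1 by ring. eapply Rle_trans; [apply Rabs_triang|].
      rewrite (Rabs_minus_sym G G'). lra. }
    lra. }
  assert (G' <> 0) by (intro; subst; rewrite Rabs_R0 in HG'; lra).
  replace (/ G' - / G) with ((G - G') / (G' * G)) by (field; auto).
  unfold Rdiv. rewrite Rabs_mult, Rabs_inv, Rabs_mult. rewrite <- Rabs_Ropp. replace (- (G - G')) with (G' - G) by ring.
  apply (Rmult_lt_reg_r (Rabs G' * Rabs G)). { apply Rmult_lt_0_compat; lra. }
  rewrite Rmult_assoc, Rinv_l by (apply Rgt_not_eq; apply Rmult_lt_0_compat; lra). rewrite Rmult_1_r.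
  apply Rlt_le_trans with (e * Rabs G ^ 2 / 2); [lra|].
  assert (e * (Rabs G / 2 * Rabs G) <= e * (Rabs G' * Rabs G)) by (apply Rmult_le_compat_l; [lra|]; apply Rmult_le_compat_r; lra).
  simpl. lra.
Qed.

Lemma cont_pt_use (f : R -> R) x : continuity_pt f x ->
  forall e, 0 < e -> exists d, 0 < d /\ forall y, Rabs (y - x) < d -> Rabs (f y - f x) < e.
Proof.
  intros H e He. destruct (H e He) as [d [Hd Hy]]. exists d; split; auto.
  intros y Hyx. destruct (Req_dec y x) as [->|Hne].
  - rewrite Rminus_eq_0, Rabs_R0; auto.
  - apply (Hy y). split; [split; [exact I| intro; apply Hne; auto]|exact Hyx].
Qed.


Lemma rc_plus a b c d F G : rcont a b c d F -> rcont a b c d G -> rcont a b c d (fun s p => F s p + G s p).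
Proof.
  intros HF HG s p Hr e He. destruct (HF s p Hr (e/2) ltac:(lra)) as [d1 [Hd1 H1]].
  destruct (HG s p Hr (e/2) ltac:(lra)) as [d2 [Hd2 H2]].
  exists (Rmin d1 d2). split; [apply Rmin_pos; auto|]. intros s' p' Hr' Hs Hp.
  pose proof (Rmin_l d1 d2); pose proof (Rmin_r d1 d2).
  specialize (H1 s' p' Hr' ltac:(lra) ltac:(lra)). specialize (H2 s' p' Hr' ltac:(lra) ltac:(lra)).
  replace (F s' p' + G s' p' - (F s p + G s p)) with ((F s' p' - F s p) + (G s' p' - G s p)) by ring.
  eapply Rle_lt_trans; [apply Rabs_triang|]. lra.
Qed.

Lemma rc_scal a b c d k F : rcont a b c d F -> rcont a b c d (fun s p => k * F s p).
Proof.
  intros HF s p Hr e He. destruct (HF s p Hr (e / (Rabs k + 1))) as [d1 [Hd1 H1]].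
  { apply Rdiv_lt_0_compat; auto. pose proof (Rabs_pos k); lra. }
  exists d1; split; auto. intros s' p' Hr' Hs Hp. specialize (H1 s' p' Hr' Hs Hp).
  replace (k * F s' p' - k * F s p) with (k * (F s' p' - F s p)) by ring. rewrite Rabs_mult.
  pose proof (Rabs_pos k). pose proof (Rabs_pos (F s' p' - F s p)).
  apply Rle_lt_trans with ((Rabs k + 1) * Rabs (F s' p' - F s p)); [nra|].
  apply (Rmult_lt_reg_l (/ (Rabs k + 1))). apply Rinv_0_lt_compat; lra.
  rewrite <- Rmult_assoc, Rinv_l, Rmult_1_l by lra. replace (/ (Rabs k + 1) * e) with (e / (Rabs k + 1)) by (unfold Rdiv; ring). auto.
Qed.

Lemma rc_minus a b c d F G : rcont a b c d F -> rcont a b c d G -> rcont a b c d (fun s p => F s p - G s p).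
Proof.
  intros HF HG. pose proof (rc_plus a b c d F (fun s p => -1 * G s p) HF (rc_scal a b c d (-1) G HG)) as H.
  intros s p Hr e He. destruct (H s p Hr e He) as [d1 [Hd1 H1]]. exists d1; split; auto.
  intros. replace (F s' p' - G s' p' - (F s p - G s p)) with (F s' p' + -1 * G s' p' - (F s p + -1 * G s p)) by ring. auto.
Qed.

Lemma rc_mult a b c d F G : rcont a b c d F -> rcont a b c d G -> rcont a b c d (fun s p => F s p * G s p).
Proof.
  intros HF HG s p Hr e He. destruct (mult_close (F s p) (G s p) e He) as [h [Hh Hc]].
  destruct (HF s p Hr h Hh) as [d1 [Hd1 H1]]. destruct (HG s p Hr h Hh) as [d2 [Hd2 H2]].
  exists (Rmin d1 d2). split; [apply Rmin_pos; auto|]. intros s' p' Hr' Hs Hp.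
  pose proof (Rmin_l d1 d2); pose proof (Rmin_r d1 d2).
  apply Hc; [apply H1|apply H2]; auto; lra.
Qed.

Lemma rc_inv a b c d G : rcont a b c d G -> (forall s p, rect a b c d s p -> G s p <> 0) ->
  rcont a b c d (fun s p => / G s p).
Proof.
  intros HG Hn s p Hr e He. destruct (inv_close (G s p) e (Hn s p Hr) He) as [h [Hh Hc]].
  destruct (HG s p Hr h Hh) as [d1 [Hd1 H1]]. exists d1; split; auto.
Qed.

Lemma rc_s a b c d (g : R -> R) : (forall s, continuity_pt g s) -> rcont a b c d (fun s p => g s).
Proof.
  intros Hg s p Hr e He. destruct (cont_pt_use g s (Hg s) e He) as [d1 [Hd1 H1]].
  exists d1; split; auto.
Qed.

Lemma rc_p a b c d (g : R -> R) : (forall p, continuity_pt g p) -> rcont a b c d (fun s p => g p).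
Proof.
  intros Hg s p Hr e He. destruct (cont_pt_use g p (Hg p) e He) as [d1 [Hd1 H1]].
  exists d1; split; auto.
Qed.

Lemma Rpower_1_l b : Rpower 1 b = 1.
Proof. unfold Rpower. rewrite ln_1, Rmult_0_r, exp_0. reflexivity. Qed.

Lemma Rpower_cont x b : 0 < x -> continuity_pt (fun s => Rpower s b) x.
Proof.
  intros Hx. pose proof (derivable_pt_lim_power x b Hx) as H.
  apply (derivable_continuous_pt _ x (exist _ _ H)).
Qed.

Lemma pw_cont b rho x : 0 < b -> 0 < rho -> continuity_pt (fun s => pw (s / rho) b) x.
Proof.
  intros Hb Hr. destruct (Rtotal_order x 0) as [Hx|[Hx|Hx]].
  - apply (continuity_pt_locally_ext (fun _ => 0) _ (- x)); [lra| |apply continuity_pt_const; intros ? ?; auto].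
    intros y Hy. unfold Rdist in Hy. unfold pw. destruct (Rlt_dec 0 (y / rho)); auto.
    exfalso. assert (0 < y) by (apply (Rmult_lt_reg_r (/ rho)); [apply Rinv_0_lt_compat; auto|]; rewrite Rmult_0_l; exact r).
    unfold Rabs in Hy; destruct Rcase_abs; lra.
  - subst. apply cont_pt_of. intros e He.
    exists (rho * Rpower e (/ b)). split. { apply Rmult_lt_0_compat; auto. unfold Rpower; apply exp_pos. }
    intros y Hy. unfold pw. replace (0 / rho) with 0 by (unfold Rdiv; ring).
    destruct (Rlt_dec 0 0); [lra|]. destruct (Rlt_dec 0 (y / rho)); [|rewrite Rminus_0_r, Rabs_R0; auto].
    rewrite Rminus_0_r, Rabs_pos_eq by (unfold Rpower; left; apply exp_pos).
    assert (Ee : Rpower (Rpower e (/ b)) b = e) by (rewrite Rpower_mult; replace (/ b * b) with 1 by (field; lra); apply Rpower_1; auto).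
    apply Rlt_le_trans with (Rpower (Rpower e (/ b)) b); [|right; exact Ee].
    apply Rlt_Rpower_l; auto. split; auto.
    rewrite Rminus_0_r in Hy. apply (Rmult_lt_reg_l rho); auto. replace (rho * (y / rho)) with y by (field; lra).
    unfold Rabs in Hy; destruct Rcase_abs; lra.
  - apply (continuity_pt_locally_ext (fun s => Rpower (s / rho) b) _ x); [lra| |].
    + intros y Hy. unfold Rdist in Hy. unfold pw. destruct (Rlt_dec 0 (y / rho)); auto.
      exfalso. apply n. apply Rdiv_lt_0_compat; auto. unfold Rabs in Hy; destruct Rcase_abs; lra.
    + apply (continuity_pt_comp (fun s => s / rho) (fun s => Rpower s b)).
      * apply continuity_pt_mult; [apply continuity_pt_id|apply continuity_pt_const; intros ? ?; auto].
      * apply Rpower_cont. apply Rdiv_lt_0_compat; auto.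
Qed.

Lemma pw_bounds x b : 0 < b -> x <= 1 -> 0 <= pw x b <= 1.
Proof.
  intros Hb Hx. unfold pw. destruct (Rlt_dec 0 x); [|lra].
  split; [unfold Rpower; left; apply exp_pos|]. rewrite <- (Rpower_1_l b). apply Rle_Rpower_l; lra.
Qed.

Lemma pw_double x al : pw x (2 * al) = pw x al ^ 2.
Proof. unfold pw. destruct Rlt_dec; [|ring]. replace (2 * al) with (al + al) by ring. rewrite Rpower_plus. ring. Qed.

Lemma Wp_bounds al rho s p : 0 < al -> 0 < rho -> 0 <= s <= rho -> Rabs (al * p) <= PI / 2 ->
  0 <= Wp al rho s p /\ Wp al rho s p <= 3 * pw (s / rho) al /\ (s = rho -> 1 <= Wp al rho s p).
Proof.
  intros Hal Hr Hs Hp. pose proof PI_RGT_0.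
  assert (Hc : 0 <= cos (al * p)) by (apply cos_ge_0; unfold Rabs in Hp; destruct Rcase_abs; lra).
  assert (Hc1 : cos (al * p) <= 1) by apply COS_bound.
  assert (Hx : s / rho <= 1) by (apply (Rmult_le_reg_r rho); auto; field_simplify; lra).
  pose proof (pw_bounds (s / rho) al Hal Hx) as [Ha0 Ha1].
  unfold Wp. rewrite pw_double. replace (2 * al * p) with (2 * (al * p)) by ring. rewrite cos_2a_cos.
  set (a := pw (s / rho) al) in *. set (c := cos (al * p)) in *.
  assert (0 <= a * c <= 1) by (split; [apply Rmult_le_pos; lra|]; apply Rle_trans with (1 * 1); [apply Rmult_le_compat; lra|lra]).
  split; [nra|]. split; [nra|].
  intros ->. assert (Ha : a = 1).
  { unfold a, pw. replace (rho / rho) with 1 by (field; lra). destruct Rlt_dec; [apply Rpower_1_l|lra]. }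
  rewrite Ha. nra.
Qed.

Lemma locally_of (x d : R) (Q : R -> Prop) : 0 < d -> (forall y, Rabs (y - x) < d -> Q y) -> locally x Q.
Proof. intros Hd H. exists (mkposreal d Hd). intros y Hy. apply H. exact Hy. Qed.

Lemma dist2_eq0 q P : dist2 q P = 0 -> q = P.
Proof.
  unfold dist2. intros H. apply sqrt_eq_0 in H; [|apply Rplus_le_le_0_compat; apply pow2_ge_0].
  destruct q as [q1 q2], P as [p1 p2]; simpl in *.
  pose proof (pow2_ge_0 (q1 - p1)). pose proof (pow2_ge_0 (q2 - p2)).
  assert ((q1 - p1) ^ 2 = 0) by lra. assert ((q2 - p2) ^ 2 = 0) by lra.
  assert (q1 - p1 = 0) by (destruct (Req_dec (q1 - p1) 0); auto; exfalso; apply (pow_nonzero _ 2 H4); auto).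
  assert (q2 - p2 = 0) by (destruct (Req_dec (q2 - p2) 0); auto; exfalso; apply (pow_nonzero _ 2 H5); auto). f_equal; lra.
Qed.

Lemma dist2_horiz q t : dist2 q (t, snd q) = Rabs (fst q - t).
Proof. unfold dist2; simpl. replace ((fst q - t) ^ 2 + (snd q - snd q) ^ 2) with ((fst q - t) ^ 2) by ring. rewrite <- sqrt_Rsqr_abs. unfold Rsqr. f_equal. ring. Qed.

Lemma dist2_vert q t : dist2 q (fst q, t) = Rabs (snd q - t).
Proof. unfold dist2; simpl. replace ((fst q - fst q) ^ 2 + (snd q - t) ^ 2) with ((snd q - t) ^ 2) by ring. rewrite <- sqrt_Rsqr_abs. unfold Rsqr. f_equal. ring. Qed.

Lemma rc_ext a b c d F G : (forall s p, F s p = G s p) -> rcont a b c d F -> rcont a b c d G.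
Proof.
  intros E H s p Hr e He. destruct (H s p Hr e He) as [d1 [Hd1 H1]]. exists d1; split; auto.
  intros. rewrite <- !E. auto.
Qed.

Definition Gfun P e Om rho k M (f : pt -> R) s p :=
  (2 * M * Wp (PI / Om) rho s p * hp k s - f (Tp P e s p)) * / hp k s.

Lemma hp_bounds k rho s : 0 < k -> k * rho <= 1 -> 0 <= s <= rho -> 1 / 2 <= hp k s <= 1.
Proof.
  intros Hk Hkr Hs. unfold hp. assert (0 <= k * s <= 1) by (split; [apply Rmult_le_pos; lra|]; apply Rle_trans with (k * rho); [apply Rmult_le_compat_l; lra|lra]).
  assert (0 <= k ^ 2 * s ^ 2 <= 1) by (replace (k ^ 2 * s ^ 2) with ((k * s) ^ 2) by ring; split; [apply pow2_ge_0|]; nra).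
  lra.
Qed.

Lemma Gfun_rcont P e Om rho k M D f : fst e ^ 2 + snd e ^ 2 = 1 -> 0 < Om -> 0 < rho -> 0 < k -> k * rho <= 1 ->
  (forall s p, 0 <= s <= rho -> Rabs p <= Om / 2 -> closure D (Tp P e s p)) ->
  (forall p, closure D p -> forall eps, 0 < eps -> exists dl, 0 < dl /\
      forall q, closure D q -> dist2 p q < dl -> Rabs (f q - f p) < eps) ->
  rcont 0 rho (- (Om / 2)) (Om / 2) (Gfun P e Om rho k M f).
Proof.
  intros He HOm Hr Hk Hkr HcD Hfc.
  assert (Hal : 0 < PI / Om) by (apply Rdiv_lt_0_compat; auto; apply PI_RGT_0).
  assert (HF : rcont 0 rho (- (Om / 2)) (Om / 2) (fun s p => f (Tp P e s p))).
  { intros s p [Hs Hp] eps Heps.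
    assert (Hab : Rabs p <= Om / 2) by (unfold Rabs; destruct Rcase_abs; lra).
    destruct (Hfc _ (HcD s p Hs Hab) eps Heps) as [dl [Hdl Hq]].
    exists (dl / (8 * (1 + rho))). split; [apply Rdiv_lt_0_compat; lra|].
    intros s' p' [Hs' Hp'] H1 H2.
    assert (Hab' : Rabs p' <= Om / 2) by (unfold Rabs; destruct Rcase_abs; lra).
    apply Hq; [apply HcD; auto|].
    eapply Rle_lt_trans; [apply Tp_lip; auto|].
    rewrite (Rabs_pos_eq s') by lra. rewrite Rabs_minus_sym in H1, H2.
    set (h := dl / (8 * (1 + rho))) in *.
    assert (h * (8 * (1 + rho)) = dl) by (unfold h; field; lra).
    assert (s' * Rabs (p - p') <= rho * h) by (apply Rmult_le_compat; try lra; apply Rabs_pos).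
    nra. }
  assert (HW : rcont 0 rho (- (Om / 2)) (Om / 2) (fun s p => Wp (PI / Om) rho s p)).
  { unfold Wp.
    pose proof (rc_s 0 rho (- (Om / 2)) (Om / 2) _ (fun x => pw_cont (PI / Om) rho x Hal Hr)) as A1.
    assert (Hal2 : 0 < 2 * (PI / Om)) by lra.
    pose proof (rc_s 0 rho (- (Om / 2)) (Om / 2) _ (fun x => pw_cont (2 * (PI / Om)) rho x Hal2 Hr)) as A2.
    assert (Cc : forall b, forall x, continuity_pt (fun p => cos (b * p)) x).
    { intros b x. apply (continuity_pt_comp (fun p => b * p) cos).
      - apply continuity_pt_mult; [apply continuity_pt_const; intros ? ?; auto|apply continuity_pt_id].
      - apply continuity_cos. }
    pose proof (rc_p 0 rho (- (Om / 2)) (Om / 2) _ (Cc (PI / Om))) as C1.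
    pose proof (rc_p 0 rho (- (Om / 2)) (Om / 2) _ (Cc (2 * (PI / Om)))) as C2.
    pose proof (rc_minus _ _ _ _ _ _ (rc_scal _ _ _ _ 2 _ (rc_mult _ _ _ _ _ _ A1 C1)) (rc_mult _ _ _ _ _ _ A2 C2)) as R.
    eapply rc_ext; [|exact R]. intros s p. simpl. ring. }
  assert (Hh : rcont 0 rho (- (Om / 2)) (Om / 2) (fun s p => hp k s)).
  { apply rc_s. intros x. unfold hp. 
    apply continuity_pt_minus; [apply continuity_pt_const; intros ? ?; auto|].
    apply continuity_pt_mult; [|apply continuity_pt_const; intros ? ?; auto].
    apply continuity_pt_mult; [apply continuity_pt_const; intros ? ?; auto|].
    apply derivable_continuous_pt. apply derivable_pt_pow. }
  pose proof (rc_mult _ _ _ _ _ _ (rc_minus _ _ _ _ _ _ (rc_mult _ _ _ _ _ _ (rc_scal _ _ _ _ (2 * M) _ HW) Hh) HF)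
     (rc_inv _ _ _ _ _ Hh (fun s p Hr' => ltac:(destruct Hr' as [Hs _]; pose proof (hp_bounds k rho s Hk Hkr Hs); lra)))) as R.
  eapply rc_ext; [|exact R]. intros s p. unfold Gfun. simpl. ring.
Qed.

Lemma pw_0 rho b : pw (0 / rho) b = 0.
Proof. unfold pw. replace (0 / rho) with 0 by (unfold Rdiv; ring). destruct Rlt_dec; lra. Qed.

Theorem sector_max (P e : pt) (Om rho k M : R) (D : pset) (f : pt -> R) :
  fst e ^ 2 + snd e ^ 2 = 1 -> PI < Om < 2 * PI -> 0 < rho -> 0 < k -> k * rho <= 1 -> 0 <= M ->
  Defs.open_set D ->
  (forall s p, 0 < s <= rho -> Rabs p < Om / 2 -> D (Tp P e s p)) ->
  (forall s p, 0 <= s <= rho -> Rabs p <= Om / 2 -> closure D (Tp P e s p)) ->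
  (forall s, 0 <= s <= rho -> f (Tp P e s (Om / 2)) = 0 /\ f (Tp P e s (- (Om / 2))) = 0) ->
  (forall y, D y -> dist2 y P < rho -> exists p, Rabs p < Om / 2 /\ y = Tp P e (dist2 y P) p) ->
  ~ D P ->
  (forall p, closure D p -> forall eps, 0 < eps -> exists dl, 0 < dl /\
      forall q, closure D q -> dist2 p q < dl -> Rabs (f q - f p) < eps) ->
  (forall p, closure D p -> f p <= M) ->
  (forall p, D p -> ex_dx f p /\ ex_dy f p /\ ex_dx (dx f) p /\ ex_dy (dy f) p) ->
  (forall p, D p -> dx (dx f) p + dy (dy f) p + k ^ 2 * f p = 0) ->
  forall y, D y -> dist2 y P < rho -> f y <= 6 * M * Rpower (dist2 y P / rho) (PI / Om).
Proof.
  intros He HOm Hr Hk Hkr HM HDo H1 H2 H3 H4 H5 Hfc HfM Hf2 Hhelm.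
  pose proof PI_RGT_0 as HPI.
  assert (HOm0 : 0 < Om) by lra.
  set (al := PI / Om).
  assert (Hal : 0 < al) by (apply Rdiv_lt_0_compat; lra).
  assert (HalOm : al * (Om / 2) = PI / 2) by (unfold al; field; lra).
  assert (Halp : forall p, Rabs p <= Om / 2 -> Rabs (al * p) <= PI / 2).
  { intros p Hp. rewrite Rabs_mult, Rabs_pos_eq by lra. rewrite <- HalOm. apply Rmult_le_compat_l; lra. }
  assert (HOmPI : Om / 2 < PI) by lra.
  set (G := Gfun P e Om rho k M f).
  pose proof (Gfun_rcont P e Om rho k M D f He HOm0 Hr Hk Hkr H2 Hfc) as HGc.
  destruct (EVT2 0 rho (- (Om / 2)) (Om / 2) G ltac:(lra) ltac:(lra) HGc) as [s0 [p0 [[Hs0 Hp0] Hmin]]].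
  set (m := G s0 p0).
  assert (Hrep : forall q, D q -> dist2 q P < rho ->
     exists s p, 0 < s < rho /\ Rabs p < Om / 2 /\ q = Tp P e s p /\ s = dist2 q P).
  { intros q Hq Hqd. destruct (H4 q Hq Hqd) as [p [Hp Hqe]].
    assert (Hpos : 0 < dist2 q P).
    { destruct (Rle_lt_or_eq_dec 0 (dist2 q P) (sqrt_pos _)) as [Hl|Hl]; auto.
      exfalso. apply H5. rewrite <- (dist2_eq0 q P (eq_sym Hl)). auto. }
    exists (dist2 q P), p. repeat split; auto; lra. }
  assert (HGval : forall s p, 0 < s <= rho -> Rabs p < Om / 2 ->
     Phib P e al rho k M (Tp P e s p) - f (Tp P e s p) - G s p * hb P k (Tp P e s p) = 0 /\
     hb P k (Tp P e s p) = hp k s /\ 1 / 2 <= hp k s <= 1).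
  { intros s p Hs Hp. assert (Hp' : - PI < p < PI) by (unfold Rabs in Hp; destruct Rcase_abs; split; lra).
    destruct (Phib_Tp P e al rho k M s p He ltac:(lra) Hp' Hr) as [E1 E2].
    pose proof (hp_bounds k rho s Hk Hkr ltac:(lra)).
    rewrite E1, E2. unfold G, Gfun. fold al. split; [field; lra|auto]. }
  assert (Hm : 0 <= m).
  { apply Rnot_lt_le. intro Hneg.
    destruct (Req_dec s0 0) as [Hz|Hz].
    {
      subst s0. unfold m, G, Gfun in Hneg. rewrite Tp_0 in Hneg.
      destruct (H3 0 ltac:(lra)) as [Hf0 _]. rewrite Tp_0 in Hf0. rewrite Hf0 in Hneg.
      unfold Wp in Hneg. rewrite !pw_0 in Hneg.
      replace ((2 * M * (2 * 0 * cos (PI / Om * p0) - 0 * cos (2 * (PI / Om) * p0)) * hp k 0 - 0) * / hp k 0) with 0 in Hneg by ring.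
      lra. }
    assert (Hpb : Rabs p0 <= Om / 2) by (unfold Rabs; destruct Rcase_abs; lra).
    destruct (Wp_bounds al rho s0 p0 Hal Hr ltac:(lra) (Halp p0 Hpb)) as [W1 [W2 W3]].
    pose proof (hp_bounds k rho s0 Hk Hkr ltac:(lra)) as Hhp.
    destruct (Req_dec (Rabs p0) (Om / 2)) as [Hedge|Hedge].
    {
      assert (Hf0 : f (Tp P e s0 p0) = 0).
      { destruct (H3 s0 ltac:(lra)) as [Ha Hb]. unfold Rabs in Hedge; destruct Rcase_abs.
        - replace p0 with (- (Om / 2)) by lra. auto.
        - replace p0 with (Om / 2) by lra. auto. }
      unfold m, G, Gfun in Hneg. rewrite Hf0 in Hneg. fold al in Hneg.
      replace ((2 * M * Wp al rho s0 p0 * hp k s0 - 0) * / hp k s0) with (2 * M * Wp al rho s0 p0) in Hneg by (field; lra).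
      assert (0 <= M * Wp al rho s0 p0) by (apply Rmult_le_pos; lra). lra. }
    destruct (Req_dec s0 rho) as [Harc|Harc].
    {
      assert (Hf0 : f (Tp P e s0 p0) <= M) by (apply HfM; apply H2; [lra|auto]).
      specialize (W3 Harc).
      unfold m, G, Gfun in Hneg. fold al in Hneg.
      assert (Hinv : 0 < / hp k s0) by (apply Rinv_0_lt_compat; lra).
      assert (0 <= 2 * M * Wp al rho s0 p0 * hp k s0 - f (Tp P e s0 p0)).
      { assert (M * 1 <= M * Wp al rho s0 p0) by (apply Rmult_le_compat_l; lra).
        assert (M * Wp al rho s0 p0 * (1/2) <= M * Wp al rho s0 p0 * hp k s0).
        { apply Rmult_le_compat_l; [apply Rmult_le_pos|]; lra. }
        lra. }
      assert (0 <= (2 * M * Wp al rho s0 p0 * hp k s0 - f (Tp P e s0 p0)) * / hp k s0) by (apply Rmult_le_pos; lra).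
      lra. }
    assert (Hs0' : 0 < s0 < rho) by lra.
    assert (Hp0' : Rabs p0 < Om / 2) by lra.
    set (q0 := Tp P e s0 p0).
    assert (Dq0 : D q0) by (apply H1; auto; lra).
    set (Psi := fun q => Phib P e al rho k M q - f q - m * hb P k q).
    destruct (HGval s0 p0 ltac:(lra) Hp0') as [Ps0 [Hb0 Hb0']]. fold m q0 in Ps0, Hb0.
    assert (HPsi0 : Psi q0 = 0) by (unfold Psi; exact Ps0).
    assert (HPsinb : forall q, D q -> dist2 q P < rho -> 0 <= Psi q /\ RegC P e q).
    { intros q Hq Hqd. destruct (Hrep q Hq Hqd) as [s [p [Hs [Hp [-> _]]]]].
      destruct (HGval s p ltac:(lra) Hp) as [E1 [E2 E3]].
      assert (Hrs : rect 0 rho (- (Om / 2)) (Om / 2) s p) by (split; [lra|unfold Rabs in Hp; destruct Rcase_abs; split; lra]).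
      pose proof (Hmin s p Hrs) as Hge. fold m in Hge.
      split.
      - unfold Psi. replace (Phib P e al rho k M (Tp P e s p) - f (Tp P e s p) - m * hb P k (Tp P e s p))
          with ((G s p - m) * hb P k (Tp P e s p)) by lra.
        apply Rmult_le_pos; lra.
      - apply RegC_Tp; auto; [lra|unfold Rabs in Hp; destruct Rcase_abs; split; lra]. }
    destruct (HDo q0 Dq0) as [e0 [He0 Hball]].
    assert (Hdq0 : dist2 q0 P = s0) by (apply dist2_Tp; auto; lra).
    set (dl := Rmin e0 (rho - s0)).
    assert (Hdl : 0 < dl) by (apply Rmin_pos; lra).
    assert (NB : forall q, dist2 q0 q < dl -> D q /\ dist2 q P < rho).
    { intros q Hq.
      assert (Hq1 : dist2 q0 q < e0) by (eapply Rlt_le_trans; [exact Hq| apply Rmin_l]).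
      assert (Hq2 : dist2 q0 q < rho - s0) by (eapply Rlt_le_trans; [exact Hq| apply Rmin_r]).
      split.
      - apply Hball. auto.
      - pose proof (dist2_triang q q0 P) as T. rewrite (dist2_sym q q0) in T. lra. }
    assert (Hreg0 : RegC P e q0) by (apply RegC_Tp; auto; [lra|unfold Rabs in Hp0'; destruct Rcase_abs; split; lra]).
    assert (DX : 0 <= Phibxx P e al rho k M q0 - dx (dx f) q0 - m * - k ^ 2).
    { set (y0 := snd q0).
      set (g := fun t => Psi (t, y0)).
      assert (Hnb : forall t, Rabs (t - fst q0) < dl -> D (t, y0) /\ dist2 (t, y0) P < rho).
      { intros t Ht. apply NB. unfold y0. rewrite dist2_horiz, Rabs_minus_sym. auto. }
      assert (Hgd : forall t, Rabs (t - fst q0) < dl ->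
          is_derive g t (Phibx P e al rho k M (t, y0) - dx f (t, y0) - m * hbx P k (t, y0))).
      { intros t Ht. destruct (Hnb t Ht) as [Dt Dtd]. destruct (HPsinb _ Dt Dtd) as [_ Rt].
        pose proof (d_Phib_x P e al rho k M (t, y0) Rt) as A. cbn [fst snd] in A.
        destruct (Hf2 _ Dt) as [Ex _]. pose proof (Derive_correct _ _ Ex) as B. cbn [fst snd] in B.
        pose proof (d_hb_x P k (t, y0)) as C. cbn [fst snd] in C.
        unfold g, Psi. apply isd_minus; [apply isd_minus|apply isd_scal]; auto. }
      assert (Hg0 : g (fst q0) = 0) by (unfold g, y0; rewrite <- HPsi0; reflexivity).
      pose proof (second_deriv_min g (fst q0) dl Hdl) as SD.
      assert (HD2 : is_derive (Derive g) (fst q0) (Phibxx P e al rho k M q0 - dx (dx f) q0 - m * - k ^ 2)).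
      { apply is_derive_ext_loc with (f := fun t => Phibx P e al rho k M (t, y0) - dx f (t, y0) - m * hbx P k (t, y0)).
        - apply (locally_of _ dl); auto. intros t Ht. symmetry. apply is_derive_unique. apply Hgd; auto.
        - pose proof (d_Phibx_x P e al rho k M q0 Hreg0) as A.
          destruct (Hf2 _ Dq0) as [_ [_ [Exx _]]]. pose proof (Derive_correct _ _ Exx) as B.
          pose proof (d_hbx_x P k q0) as C.
          apply isd_minus; [apply isd_minus|apply isd_scal]; auto. }
      rewrite <- (is_derive_unique _ _ _ HD2). apply SD.
      - intros t Ht. rewrite Hg0. destruct (Hnb t Ht) as [Dt Dtd]. apply (HPsinb _ Dt Dtd).
      - intros t Ht. eexists. apply Hgd; auto.
      - eexists; exact HD2. }
    assert (DY : 0 <= Phibyy P e al rho k M q0 - dy (dy f) q0 - m * - k ^ 2).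
    { set (x0 := fst q0).
      set (g := fun t => Psi (x0, t)).
      assert (Hnb : forall t, Rabs (t - snd q0) < dl -> D (x0, t) /\ dist2 (x0, t) P < rho).
      { intros t Ht. apply NB. unfold x0. rewrite dist2_vert, Rabs_minus_sym. auto. }
      assert (Hgd : forall t, Rabs (t - snd q0) < dl ->
          is_derive g t (Phiby P e al rho k M (x0, t) - dy f (x0, t) - m * hby P k (x0, t))).
      { intros t Ht. destruct (Hnb t Ht) as [Dt Dtd]. destruct (HPsinb _ Dt Dtd) as [_ Rt].
        pose proof (d_Phib_y P e al rho k M (x0, t) Rt) as A. cbn [fst snd] in A.
        destruct (Hf2 _ Dt) as [_ [Ey _]]. pose proof (Derive_correct _ _ Ey) as B. cbn [fst snd] in B.
        pose proof (d_hb_y P k (x0, t)) as C. cbn [fst snd] in C.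
        unfold g, Psi. apply isd_minus; [apply isd_minus|apply isd_scal]; auto. }
      assert (Hg0 : g (snd q0) = 0) by (unfold g, x0; rewrite <- HPsi0; reflexivity).
      pose proof (second_deriv_min g (snd q0) dl Hdl) as SD.
      assert (HD2 : is_derive (Derive g) (snd q0) (Phibyy P e al rho k M q0 - dy (dy f) q0 - m * - k ^ 2)).
      { apply is_derive_ext_loc with (f := fun t => Phiby P e al rho k M (x0, t) - dy f (x0, t) - m * hby P k (x0, t)).
        - apply (locally_of _ dl); auto. intros t Ht. symmetry. apply is_derive_unique. apply Hgd; auto.
        - pose proof (d_Phiby_y P e al rho k M q0 Hreg0) as A.
          destruct (Hf2 _ Dq0) as [_ [_ [_ Eyy]]]. pose proof (Derive_correct _ _ Eyy) as B.
          pose proof (d_hby_y P k q0) as C.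
          apply isd_minus; [apply isd_minus|apply isd_scal]; auto. }
      rewrite <- (is_derive_unique _ _ _ HD2). apply SD.
      - intros t Ht. rewrite Hg0. destruct (Hnb t Ht) as [Dt Dtd]. apply (HPsinb _ Dt Dtd).
      - intros t Ht. eexists. apply Hgd; auto.
      - eexists; exact HD2. }
    assert (Hp0pi : - PI < p0 < PI) by (unfold Rabs in Hp0'; destruct Rcase_abs; split; lra).
    assert (Hineq : Phibxx P e al rho k M q0 + Phibyy P e al rho k M q0 + k ^ 2 * Phib P e al rho k M q0 <= 0).
    { apply Phi_ineq; auto; try lra.
      - unfold q0. rewrite FX_Tp, FY_Tp, ang_polar by (auto; lra). apply cos_ge_0;
        pose proof (Halp p0 Hpb); unfold Rabs in H; destruct Rcase_abs; lra.
      - unfold q0. rewrite FX_Tp, FY_Tp, rad_polar by (auto; lra). lra. }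
    pose proof (Hhelm q0 Dq0) as Hh0.
    unfold Psi in HPsi0. rewrite Hb0 in HPsi0.
    assert (Hmk : m * k ^ 2 < 0) by (apply Rmult_neg_pos; auto; apply pow_lt; auto).
    assert (Hmk2 : m * k ^ 2 * (2 - hp k s0) < 0) by (apply Rmult_neg_pos; lra).
    assert (Ef : k ^ 2 * f q0 = k ^ 2 * Phib P e al rho k M q0 - m * k ^ 2 * hp k s0).
    { replace (f q0) with (Phib P e al rho k M q0 - m * hp k s0) by lra. ring. }
    nra.
  }
  intros y Hy Hyd. destruct (Hrep y Hy Hyd) as [s [p [Hs [Hp [-> Es]]]]]. rewrite <- Es.
  assert (Hrs : rect 0 rho (- (Om / 2)) (Om / 2) s p) by (split; [lra|unfold Rabs in Hp; destruct Rcase_abs; split; lra]).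
  pose proof (Hmin s p Hrs) as Hge. fold m in Hge.
  destruct (HGval s p ltac:(lra) Hp) as [E1 [E2 E3]].
  assert (Hp' : - PI < p < PI) by (unfold Rabs in Hp; destruct Rcase_abs; split; lra).
  destruct (Phib_Tp P e al rho k M s p He ltac:(lra) Hp' Hr) as [F1 _].
  destruct (Wp_bounds al rho s p Hal Hr ltac:(lra) (Halp p ltac:(lra))) as [W1 [W2 _]].
  assert (Hpw : pw (s / rho) al = Rpower (s / rho) al).
  { unfold pw. destruct Rlt_dec; auto. exfalso; apply n; apply Rdiv_lt_0_compat; lra. }
  rewrite Hpw in W2. rewrite F1, E2 in E1.
  assert (f (Tp P e s p) = 2 * M * Wp al rho s p * hp k s - G s p * hp k s) by lra.
  rewrite H. assert (0 <= G s p * hp k s) by (apply Rmult_le_pos; lra).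
  assert (2 * M * Wp al rho s p * hp k s <= 2 * M * (3 * Rpower (s / rho) al) * 1).
  { apply Rmult_le_compat; try lra. apply Rmult_le_pos; lra. apply Rmult_le_compat_l; lra. }
  lra.
Qed.

Lemma succ_mod N i : (i < N)%nat -> (i + 1) mod N = (if Nat.eqb (i + 1) N then 0 else i + 1)%nat.
Proof.
  intros H. destruct (Nat.eqb_spec (i + 1) N) as [E|E].
  - rewrite E. apply Nat.Div0.mod_same.
  - apply Nat.mod_small. lia.
Qed.

Lemma pred_mod N j : (j < N)%nat -> (j + N - 1) mod N = (if Nat.eqb j 0 then N - 1 else j - 1)%nat.
Proof.
  intros H. destruct (Nat.eqb_spec j 0) as [E|E].
  - subst. replace (0 + N - 1)%nat with (N - 1)%nat by lia. apply Nat.mod_small. lia.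
  - replace (j + N - 1)%nat with ((j - 1) + 1 * N)%nat by lia. rewrite Nat.Div0.mod_add. apply Nat.mod_small. lia.
Qed.

Lemma idx_facts N j : (3 <= N)%nat -> (j < N)%nat ->
  let jm := ((j + N - 1) mod N)%nat in
  (jm < N)%nat /\ jm <> j /\ jm <> ((j + 1) mod N)%nat /\ ((jm + 1) mod N)%nat = j /\
  (forall i, (i < N)%nat -> i <> j -> i <> jm -> j <> i /\ j <> ((i + 1) mod N)%nat).
Proof.
  intros HN Hj jm. unfold jm. rewrite (pred_mod N j Hj).
  rewrite (succ_mod N j Hj).
  destruct (Nat.eqb_spec j 0) as [E|E]; destruct (Nat.eqb_spec (j + 1) N) as [E2|E2]; try lia.
  - subst. rewrite succ_mod by lia. destruct (Nat.eqb_spec (N - 1 + 1) N); [|lia].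
    repeat split; try lia; match goal with |- context [((?a + 1) mod N)%nat] => rewrite (succ_mod N a) by lia; destruct (Nat.eqb_spec (a + 1) N); lia end.
  - rewrite succ_mod by lia. destruct (Nat.eqb_spec (j - 1 + 1) N); [lia|].
    repeat split; try lia; match goal with |- context [((?a + 1) mod N)%nat] => rewrite (succ_mod N a) by lia; destruct (Nat.eqb_spec (a + 1) N); lia end.
  - rewrite succ_mod by lia. destruct (Nat.eqb_spec (j - 1 + 1) N); [lia|].
    repeat split; try lia; match goal with |- context [((?a + 1) mod N)%nat] => rewrite (succ_mod N a) by lia; destruct (Nat.eqb_spec (a + 1) N); lia end.
Qed.

Lemma vtx_lt N P i : (i < N)%nat -> vtx N P i = P i.
Proof. intros. unfold vtx. rewrite Nat.mod_small; auto. Qed.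

Lemma finite_min (n : nat) (Q : nat -> R -> Prop) :
  (forall i, (i < n)%nat -> exists r, 0 < r /\ Q i r) ->
  (forall i r r', Q i r -> 0 < r' <= r -> Q i r') ->
  exists r, 0 < r /\ forall i, (i < n)%nat -> Q i r.
Proof.
  intros H Hm. induction n.
  - exists 1. split; [lra|]. intros; lia.
  - destruct IHn as [r [Hr Hq]]. { intros i Hi. apply H. lia. }
    destruct (H n ltac:(lia)) as [r' [Hr' Hq']].
    exists (Rmin r r'). split; [apply Rmin_pos; auto|].
    intros i Hi. destruct (Nat.eq_dec i n) as [->|Hne].
    + apply (Hm n r'); auto. split; [apply Rmin_pos; auto|apply Rmin_r].
    + apply (Hm i r); [apply Hq; lia|]. split; [apply Rmin_pos; auto|apply Rmin_l].
Qed.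

Definition Rv (e : pt) (p : R) : pt := (fst e * cos p - snd e * sin p, snd e * cos p + fst e * sin p).

Lemma cross_Rv e a b : fst e ^ 2 + snd e ^ 2 = 1 -> cross2 (Rv e a) (Rv e b) = sin (b - a).
Proof.
  intros He. unfold cross2, Rv; simpl. rewrite sin_minus.
  replace (sin b * cos a - cos b * sin a) with ((sin b * cos a - cos b * sin a) * 1) by ring. rewrite <- He. ring.
Qed.

Definition gam_of (a b : pt) := acos (dot2 a b / (norm2 a * norm2 b)).
Definition Om_of (a b : pt) := 2 * PI - gam_of a b.
Definition e_of (a b : pt) : pt :=
  let u1 := (fst b / norm2 b, snd b / norm2 b) in
  let u2 := (fst a / norm2 a, snd a / norm2 a) in
  let C := cos (gam_of a b / 2) in
  (- (fst u1 + fst u2) / (2 * C), - (snd u1 + snd u2) / (2 * C)).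

Lemma norm2_sq a : norm2 a ^ 2 = fst a ^ 2 + snd a ^ 2.
Proof. unfold norm2. rewrite pow2_sqrt; [auto|]. apply Rplus_le_le_0_compat; apply pow2_ge_0. Qed.

Lemma sumsq_pos x y : x <> 0 \/ y <> 0 -> 0 < x ^ 2 + y ^ 2.
Proof.
  intros [H|H].
  - pose proof (Rsqr_pos_lt x H). pose proof (pow2_ge_0 y). unfold Rsqr in *. nra.
  - pose proof (Rsqr_pos_lt y H). pose proof (pow2_ge_0 x). unfold Rsqr in *. nra.
Qed.

Lemma norm2_pos_of_cross a b : 0 < cross2 b a -> 0 < norm2 a /\ 0 < norm2 b.
Proof.
  intros H. unfold norm2, cross2 in *. split; apply sqrt_lt_R0; apply sumsq_pos.
  - destruct (Req_dec (fst a) 0); [|auto]. destruct (Req_dec (snd a) 0); [|auto].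
    rewrite H0, H1 in H. lra.
  - destruct (Req_dec (fst b) 0); [|auto]. destruct (Req_dec (snd b) 0); [|auto].
    rewrite H0, H1 in H. lra.
Qed.

Lemma frame_facts a b : 0 < cross2 b a ->
  fst (e_of a b) ^ 2 + snd (e_of a b) ^ 2 = 1 /\ PI < Om_of a b < 2 * PI /\
  Rv (e_of a b) (Om_of a b / 2) = (fst b / norm2 b, snd b / norm2 b) /\
  Rv (e_of a b) (- (Om_of a b / 2)) = (fst a / norm2 a, snd a / norm2 a).
Proof.
  intros H. destruct (norm2_pos_of_cross a b H) as [Ha Hb].
  pose proof (norm2_sq a) as Ena. pose proof (norm2_sq b) as Enb.
  unfold e_of, Om_of, gam_of. cbn zeta.
  set (na := norm2 a) in *. set (nb := norm2 b) in *.
  set (u1x := fst b / nb). set (u1y := snd b / nb). set (u2x := fst a / na). set (u2y := snd a / na).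
  assert (Hu1 : u1x ^ 2 + u1y ^ 2 = 1) by (unfold u1x, u1y; field_simplify; [rewrite <- Enb; field|]; lra).
  assert (Hu2 : u2x ^ 2 + u2y ^ 2 = 1) by (unfold u2x, u2y; field_simplify; [rewrite <- Ena; field|]; lra).
  assert (Ht : dot2 a b / (na * nb) = u1x * u2x + u1y * u2y) by (unfold dot2, u1x, u1y, u2x, u2y; field; lra).
  set (t := dot2 a b / (na * nb)) in *.
  set (c := u1x * u2y - u1y * u2x).
  assert (Hc : 0 < c).
  { unfold c, u1x, u1y, u2x, u2y. unfold cross2 in H.
    replace (fst b / nb * (snd a / na) - snd b / nb * (fst a / na)) with ((fst b * snd a - snd b * fst a) / (na * nb)) by (field; lra).
    apply Rdiv_lt_0_compat; [lra|]. apply Rmult_lt_0_compat; lra. }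
  assert (Htc : t ^ 2 + c ^ 2 = 1).
  { rewrite Ht. unfold c. replace 1 with ((u1x ^ 2 + u1y ^ 2) * (u2x ^ 2 + u2y ^ 2)) by (rewrite Hu1, Hu2; ring). ring. }
  assert (Ht1 : -1 < t < 1) by (split; nra).
  set (gam := acos t).
  assert (Hg : 0 < gam < PI) by (apply acos_bound_lt; auto).
  assert (Hcg : cos gam = t) by (apply cos_acos; lra).
  assert (Hsg : sin gam = c).
  { unfold gam. rewrite sin_acos by lra. replace (1 - t²) with (c ^ 2) by (unfold Rsqr; lra).
    apply sqrt_pow2. lra. }
  set (C := cos (gam / 2)). set (S := sin (gam / 2)).
  assert (HC : 0 < C) by (apply cos_gt_0; lra).
  assert (HS : 0 < S) by (apply sin_gt_0; lra).
  assert (HC2 : 2 * C ^ 2 - 1 = t).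
  { rewrite <- Hcg. replace gam with (2 * (gam / 2)) by field. rewrite cos_2a_cos. unfold C. ring. }
  assert (HSC : 2 * S * C = c).
  { rewrite <- Hsg. replace gam with (2 * (gam / 2)) by field. rewrite sin_2a. unfold C, S. ring. }
  assert (K1 : (u1y + u2y) * c = (1 + t) * (u1x - u2x)).
  { rewrite Ht. unfold c.
    replace ((1 + (u1x * u2x + u1y * u2y)) * (u1x - u2x)) with
      ((u1y + u2y) * (u1x * u2y - u1y * u2x) + u1x * (1 - (u2x ^ 2 + u2y ^ 2)) - u2x * (1 - (u1x ^ 2 + u1y ^ 2))) by ring.
    rewrite Hu1, Hu2. ring. }
  assert (K2 : - (u1x + u2x) * c = (1 + t) * (u1y - u2y)).
  { rewrite Ht. unfold c.
    replace ((1 + (u1x * u2x + u1y * u2y)) * (u1y - u2y)) with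
      (- (u1x + u2x) * (u1x * u2y - u1y * u2x) + u1y * (1 - (u2x ^ 2 + u2y ^ 2)) - u2y * (1 - (u1x ^ 2 + u1y ^ 2))) by ring.
    rewrite Hu1, Hu2. ring. }
  assert (BS1 : (u1y + u2y) * S = C * (u1x - u2x)).
  { apply (Rmult_eq_reg_l (2 * C)); [|lra]. replace (2 * C * ((u1y + u2y) * S)) with ((u1y + u2y) * (2 * S * C)) by ring.
    rewrite HSC, K1, <- HC2. ring. }
  assert (BS2 : - (u1x + u2x) * S = C * (u1y - u2y)).
  { apply (Rmult_eq_reg_l (2 * C)); [|lra]. replace (2 * C * (- (u1x + u2x) * S)) with (- (u1x + u2x) * (2 * S * C)) by ring.
    rewrite HSC, K2, <- HC2. ring. }
  assert (EOm1 : cos ((2 * PI - gam) / 2) = - C /\ sin ((2 * PI - gam) / 2) = S).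
  { replace ((2 * PI - gam) / 2) with (PI - gam / 2) by field. rewrite Rtrigo_facts.cos_pi_minus, sin_PI_x. auto. }
  destruct EOm1 as [Ec Es].
  fold gam C.
  split; [|split; [|split]].
  - simpl. replace 1 with (((u1x + u2x) ^ 2 + (u1y + u2y) ^ 2) / (4 * C ^ 2)) at 3.
    + field. lra.
    + replace ((u1x + u2x) ^ 2 + (u1y + u2y) ^ 2) with ((u1x ^ 2 + u1y ^ 2) + (u2x ^ 2 + u2y ^ 2) + 2 * (u1x * u2x + u1y * u2y)) by ring.
      rewrite Hu1, Hu2, <- Ht, <- HC2. field. lra.
  - split; lra.
  - unfold Rv. simpl. rewrite Ec, Es. f_equal.
    + fold u1x. replace (- (u1x + u2x) / (2 * C) * - C - - (u1y + u2y) / (2 * C) * S) with (((u1x + u2x) * C + (u1y + u2y) * S) / (2 * C)) by (field; lra).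
      rewrite BS1. field. lra.
    + fold u1y. replace (- (u1y + u2y) / (2 * C) * - C + - (u1x + u2x) / (2 * C) * S) with (((u1y + u2y) * C + - (u1x + u2x) * S) / (2 * C)) by (field; lra).
      rewrite BS2. field. lra.
  - unfold Rv. simpl. rewrite cos_neg, sin_neg, Ec, Es. f_equal.
    + fold u2x. replace (- (u1x + u2x) / (2 * C) * - C - - (u1y + u2y) / (2 * C) * - S) with (((u1x + u2x) * C - (u1y + u2y) * S) / (2 * C)) by (field; lra).
      rewrite BS1. field. lra.
    + fold u2y. replace (- (u1y + u2y) / (2 * C) * - C + - (u1x + u2x) / (2 * C) * - S) with (((u1y + u2y) * C - - (u1x + u2x) * S) / (2 * C)) by (field; lra).
      rewrite BS2. field. lra.
Qed.

Definition cr N P i (y : pt) := cross2 (vsub (vtx N P (i + 1)) (vtx N P i)) (vsub y (vtx N P i)).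

Lemma Rabs_fst_le_dist2 y q : Rabs (fst y - fst q) <= dist2 y q.
Proof. unfold dist2. apply rad_ge. Qed.
Lemma Rabs_snd_le_dist2 y q : Rabs (snd y - snd q) <= dist2 y q.
Proof. unfold dist2. rewrite Rplus_comm. apply rad_ge. Qed.

Lemma cross_lip (w Z y q : pt) :
  Rabs (cross2 w (vsub q Z) - cross2 w (vsub y Z)) <= (Rabs (fst w) + Rabs (snd w)) * dist2 y q.
Proof.
  unfold cross2, vsub; simpl.
  replace (fst w * (snd q - snd Z) - snd w * (fst q - fst Z) - (fst w * (snd y - snd Z) - snd w * (fst y - fst Z)))
    with (fst w * (snd q - snd y) - snd w * (fst q - fst y)) by ring.
  pose proof (Rabs_fst_le_dist2 y q). pose proof (Rabs_snd_le_dist2 y q).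
  rewrite Rabs_minus_sym in H. rewrite (Rabs_minus_sym (snd y)) in H0.
  eapply Rle_trans; [apply Rabs_triang|]. rewrite Rabs_Ropp, !Rabs_mult.
  pose proof (Rabs_pos (fst w)). pose proof (Rabs_pos (snd w)). nra.
Qed.

Lemma closure_cr N P y : closure (polygon_interior N P) y -> forall i, (i < N)%nat -> 0 <= cr N P i y.
Proof.
  intros Hc i Hi. apply Rnot_lt_le. intro Hneg.
  set (w := vsub (vtx N P (i + 1)) (vtx N P i)).
  set (K := Rabs (fst w) + Rabs (snd w) + 1).
  assert (HK : 0 < K) by (unfold K; pose proof (Rabs_pos (fst w)); pose proof (Rabs_pos (snd w)); lra).
  destruct (Hc (- cr N P i y / K)) as [q [Hq Hd]]. { apply Rdiv_lt_0_compat; lra. }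
  pose proof (Hq i Hi) as Hqi. fold (cr N P i q) in Hqi.
  pose proof (cross_lip w (vtx N P i) y q) as L. fold w in L. unfold cr in Hneg, Hqi. fold w in Hneg, Hqi.
  assert ((Rabs (fst w) + Rabs (snd w)) * dist2 y q <= K * dist2 y q).
  { apply Rmult_le_compat_r; [apply sqrt_pos|]. unfold K; lra. }
  assert (K * dist2 y q < - cross2 w (vsub y (vtx N P i))).
  { apply (Rmult_lt_reg_l (/ K)); [apply Rinv_0_lt_compat; auto|]. rewrite <- Rmult_assoc, Rinv_l, Rmult_1_l by lra.
    replace (/ K * - cross2 w (vsub y (vtx N P i))) with (- cross2 w (vsub y (vtx N P i)) / K) by (unfold Rdiv; ring). auto. }
  pose proof (Rle_abs (cross2 w (vsub q (vtx N P i)) - cross2 w (vsub y (vtx N P i)))). lra.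
Qed.

Definition RG N P rg := forall j, (j < N)%nat -> forall i, (i < N)%nat -> i <> j -> i <> ((j + N - 1) mod N)%nat ->
  forall q, dist2 q (P j) < rg -> 0 < cr N P i q.

Lemma geo_radius N P : convex_polygon N P -> exists rg, 0 < rg /\ RG N P rg.
Proof.
  intros [HN HP].
  assert (Ej : forall j, (j < N)%nat -> exists r, 0 < r /\ forall i, (i < N)%nat -> i <> j -> i <> ((j + N - 1) mod N)%nat ->
     forall q, dist2 q (P j) < r -> 0 < cr N P i q).
  { intros j Hj.
    assert (Ei : forall i, (i < N)%nat -> exists r, 0 < r /\ (i <> j -> i <> ((j + N - 1) mod N)%nat ->
       forall q, dist2 q (P j) < r -> 0 < cr N P i q)).
    { intros i Hi. destruct (Nat.eq_dec i j) as [E|E]; [exists 1; split; [lra|]; intros; contradiction|].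
      destruct (Nat.eq_dec i ((j + N - 1) mod N)) as [E2|E2]; [exists 1; split; [lra|]; intros; contradiction|].
      destruct (idx_facts N j HN Hj) as [_ [_ [_ [_ Hn]]]]. destruct (Hn i Hi E E2) as [F1 F2].
      pose proof (HP i j Hi Hj F1 F2) as Hpos. fold (cr N P i (P j)) in Hpos.
      set (w := vsub (vtx N P (i + 1)) (vtx N P i)).
      set (K := Rabs (fst w) + Rabs (snd w) + 1).
      assert (HK : 0 < K) by (unfold K; pose proof (Rabs_pos (fst w)); pose proof (Rabs_pos (snd w)); lra).
      exists (cr N P i (P j) / K). split; [apply Rdiv_lt_0_compat; auto|].
      intros _ _ q Hq. pose proof (cross_lip w (vtx N P i) (P j) q) as L. unfold cr in Hpos |- *. fold w in Hpos |- *.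
      rewrite dist2_sym in Hq.
      assert ((Rabs (fst w) + Rabs (snd w)) * dist2 (P j) q <= K * dist2 (P j) q).
      { apply Rmult_le_compat_r; [apply sqrt_pos|]. unfold K; lra. }
      assert (K * dist2 (P j) q < cross2 w (vsub (P j) (vtx N P i))).
      { apply (Rmult_lt_reg_l (/ K)); [apply Rinv_0_lt_compat; auto|]. rewrite <- Rmult_assoc, Rinv_l, Rmult_1_l by lra.
        replace (/ K * cross2 w (vsub (P j) (vtx N P i))) with (cross2 w (vsub (P j) (vtx N P i)) / K) by (unfold Rdiv; ring). auto. }
      pose proof (Rle_abs (- (cross2 w (vsub q (vtx N P i)) - cross2 w (vsub (P j) (vtx N P i))))).
      rewrite Rabs_Ropp in H1. lra. }
    assert (Mi : forall i r r', (i <> j -> i <> ((j + N - 1) mod N)%nat -> forall q, dist2 q (P j) < r -> 0 < cr N P i q) ->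
       0 < r' <= r -> (i <> j -> i <> ((j + N - 1) mod N)%nat -> forall q, dist2 q (P j) < r' -> 0 < cr N P i q)).
    { intros i r r' Hq' Hr' H1 H2 q Hq. apply Hq'; auto; lra. }
    destruct (finite_min N _ Ei Mi) as [r [Hr Hq]].
    exists r. split; [auto|]. intros i Hi H1 H2. apply Hq; auto. }
  assert (Mj : forall j r r', (forall i, (i < N)%nat -> i <> j -> i <> ((j + N - 1) mod N)%nat ->
     forall q, dist2 q (P j) < r -> 0 < cr N P i q) -> 0 < r' <= r ->
     (forall i, (i < N)%nat -> i <> j -> i <> ((j + N - 1) mod N)%nat -> forall q, dist2 q (P j) < r' -> 0 < cr N P i q)).
  { intros j r r' Hq Hr i Hi H1 H2 q Hd. apply Hq; auto; lra. }
  destruct (finite_min N _ Ej Mj) as [rg [Hrg H]].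
  exists rg. split; [auto|]. intros j Hj i Hi H1 H2. apply H; auto.
Qed.

Definition va N P j := vsub (vtx N P (j + N - 1)) (P j).
Definition vb N P j := vsub (vtx N P (j + 1)) (P j).

Lemma cr_j N P j z : (j < N)%nat -> cr N P j z = cross2 (vb N P j) (vsub z (P j)).
Proof. intros. unfold cr, vb. rewrite (vtx_lt N P j H). reflexivity. Qed.

Lemma cr_jm N P j z : (3 <= N)%nat -> (j < N)%nat ->
  cr N P ((j + N - 1) mod N) z = - cross2 (va N P j) (vsub z (P j)).
Proof.
  intros HN Hj. destruct (idx_facts N j HN Hj) as [H1 [_ [_ [H4 _]]]].
  unfold cr, va. unfold vtx at 1. rewrite H4.
  assert (E : vtx N P ((j + N - 1) mod N) = vtx N P (j + N - 1)) by (unfold vtx; rewrite Nat.Div0.mod_mod; auto).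
  rewrite E. unfold cross2, vsub; simpl. ring.
Qed.

Lemma cross_ab N P j : convex_polygon N P -> (j < N)%nat -> 0 < cross2 (vb N P j) (va N P j).
Proof.
  intros [HN HP] Hj. destruct (idx_facts N j HN Hj) as [H1 [H2 [H3 _]]].
  pose proof (HP j _ Hj H1 H2 H3) as H. unfold vb, va. rewrite <- (vtx_lt N P j Hj). exact H.
Qed.

Lemma closure_adj N P j y : convex_polygon N P -> (j < N)%nat -> closure (polygon_interior N P) y ->
  0 <= cross2 (vb N P j) (vsub y (P j)) /\ cross2 (va N P j) (vsub y (P j)) <= 0.
Proof.
  intros HP Hj Hc. destruct HP as [HN HP']. destruct (idx_facts N j HN Hj) as [H1 _].
  pose proof (closure_cr N P y Hc j Hj) as A. pose proof (closure_cr N P y Hc _ H1) as B.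
  rewrite cr_j in A by auto. rewrite cr_jm in B by auto. split; lra.
Qed.

Lemma in_closure N P rg j y : convex_polygon N P -> (j < N)%nat -> RG N P rg -> dist2 y (P j) < rg ->
  0 <= cross2 (vb N P j) (vsub y (P j)) -> cross2 (va N P j) (vsub y (P j)) <= 0 ->
  closure (polygon_interior N P) y.
Proof.
  intros HP Hj Hrg Hy H1 H2 eps Heps. pose proof (cross_ab N P j HP Hj) as Hab.
  destruct HP as [HN HP']. destruct (idx_facts N j HN Hj) as [Hjm _].
  set (a := va N P j) in *. set (b := vb N P j) in *.
  set (w1 := fst a + fst b). set (w2 := snd a + snd b).
  set (K := 2 * (Rabs w1 + Rabs w2 + 1)).
  assert (HK : 0 < K) by (unfold K; pose proof (Rabs_pos w1); pose proof (Rabs_pos w2); lra).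
  set (mu := Rmin eps (rg - dist2 y (P j))).
  assert (Hmu : 0 < mu) by (apply Rmin_pos; lra).
  set (eta := mu / K).
  assert (Heta : 0 < eta) by (apply Rdiv_lt_0_compat; auto).
  set (z := (fst y + eta * w1, snd y + eta * w2)).
  assert (Hyz : dist2 y z < mu).
  { eapply Rle_lt_trans; [apply dist2_le_sum|]. unfold z; simpl.
    replace (fst y - (fst y + eta * w1)) with (- (eta * w1)) by ring.
    replace (snd y - (snd y + eta * w2)) with (- (eta * w2)) by ring.
    rewrite !Rabs_Ropp, !Rabs_mult, (Rabs_pos_eq eta) by lra.
    assert (eta * K = mu) by (unfold eta; field; lra). unfold K in H.
    pose proof (Rabs_pos w1); pose proof (Rabs_pos w2). nra. }
  exists z. split.
  - intros i Hi. change (0 < cr N P i z). destruct (Nat.eq_dec i j) as [->|E1].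
    + rewrite cr_j by auto. fold b.
      replace (cross2 b (vsub z (P j))) with (cross2 b (vsub y (P j)) + eta * cross2 b a)
        by (unfold cross2, vsub, z, w1, w2; simpl; ring).
      assert (0 < eta * cross2 b a) by (apply Rmult_lt_0_compat; auto). lra.
    + destruct (Nat.eq_dec i ((j + N - 1) mod N)) as [->|E2].
      * rewrite cr_jm by auto. fold a.
        replace (cross2 a (vsub z (P j))) with (cross2 a (vsub y (P j)) - eta * cross2 b a)
          by (unfold cross2, vsub, z, w1, w2; simpl; ring).
        assert (0 < eta * cross2 b a) by (apply Rmult_lt_0_compat; auto). lra.
      * apply (Hrg j Hj i Hi E1 E2).
        pose proof (dist2_triang z y (P j)). rewrite dist2_sym in Hyz.
        pose proof (Rmin_r eps (rg - dist2 y (P j))). fold mu in H0. lra.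
  - pose proof (Rmin_l eps (rg - dist2 y (P j))). fold mu in H. lra.
Qed.

Lemma polar_cross N P j s p : convex_polygon N P -> (j < N)%nat ->
  cross2 (vb N P j) (vsub (Tp (P j) (e_of (va N P j) (vb N P j)) s p) (P j)) =
    norm2 (vb N P j) * s * sin (p - Om_of (va N P j) (vb N P j) / 2) /\
  cross2 (va N P j) (vsub (Tp (P j) (e_of (va N P j) (vb N P j)) s p) (P j)) =
    norm2 (va N P j) * s * sin (p + Om_of (va N P j) (vb N P j) / 2).
Proof.
  intros HP Hj. pose proof (cross_ab N P j HP Hj) as Hab.
  destruct (norm2_pos_of_cross _ _ Hab) as [Ha Hb].
  destruct (frame_facts _ _ Hab) as [He [HOm [R1 R2]]].
  set (a := va N P j) in *. set (b := vb N P j) in *.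
  set (e := e_of a b) in *. set (Om := Om_of a b) in *.
  set (na := norm2 a) in *. set (nb := norm2 b) in *.
  assert (Eb1 : fst b = nb * fst (Rv e (Om / 2))) by (rewrite R1; simpl; field; lra).
  assert (Eb2 : snd b = nb * snd (Rv e (Om / 2))) by (rewrite R1; simpl; field; lra).
  assert (Ea1 : fst a = na * fst (Rv e (- (Om / 2)))) by (rewrite R2; simpl; field; lra).
  assert (Ea2 : snd a = na * snd (Rv e (- (Om / 2)))) by (rewrite R2; simpl; field; lra).
  assert (Ev : vsub (Tp (P j) e s p) (P j) = (s * fst (Rv e p), s * snd (Rv e p))) by (unfold vsub, Tp, Rv; cbn [fst snd]; f_equal; ring).
  pose proof (cross_Rv e (Om / 2) p He) as C1. pose proof (cross_Rv e (- (Om / 2)) p He) as C2.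
  rewrite Ev. split.
  - unfold cross2 in *; cbn [fst snd]. rewrite Eb1, Eb2. rewrite <- C1. ring.
  - unfold cross2 in *; cbn [fst snd]. rewrite Ea1, Ea2. replace (p + Om / 2) with (p - - (Om / 2)) by ring. rewrite <- C2. ring.
Qed.

Lemma dist2_refl p : dist2 p p = 0.
Proof. unfold dist2. replace ((fst p - fst p) ^ 2 + (snd p - snd p) ^ 2) with 0 by ring. apply sqrt_0. Qed.

Lemma Pj_closure N P rg j : convex_polygon N P -> (j < N)%nat -> RG N P rg -> 0 < rg ->
  closure (polygon_interior N P) (P j).
Proof.
  intros HP Hj Hrg Hr. apply (in_closure N P rg j); auto.
  - rewrite dist2_refl. auto.
  - unfold cross2, vsub; simpl. lra.
  - unfold cross2, vsub; simpl. lra.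
Qed.

Lemma not_cl_omega N P omega rg dl j y : convex_polygon N P -> (j < N)%nat -> RG N P rg -> 0 < rg ->
  (forall x z, polygon_interior N P x -> omega z -> dl <= dist2 x z) ->
  dist2 y (P j) < dl / 3 -> ~ closure omega y.
Proof.
  intros HP Hj Hrg Hr Hdl Hy Hc.
  assert (Hdl0 : 0 < dl / 3) by (pose proof (sqrt_pos ((fst y - fst (P j)) ^ 2 + (snd y - snd (P j)) ^ 2)); unfold dist2 in Hy; lra).
  destruct (Hc (dl / 3) Hdl0) as [q [Hq Hyq]].
  destruct (Pj_closure N P rg j HP Hj Hrg Hr (dl / 3) Hdl0) as [x [Hx Hpx]].
  pose proof (Hdl x q Hx Hq).
  pose proof (dist2_triang x (P j) q). pose proof (dist2_triang (P j) y q).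
  rewrite dist2_sym in Hpx. rewrite dist2_sym in Hy. lra.
Qed.

Lemma vertex_sector N P omega rg dl j rho :
  convex_polygon N P -> RG N P rg -> 0 < rg ->
  (forall x z, polygon_interior N P x -> omega z -> dl <= dist2 x z) ->
  (j < N)%nat -> 0 < rho -> rho < rg -> 4 * rho <= dl ->
  let Pj := P j in let e := e_of (va N P j) (vb N P j) in let Om := Om_of (va N P j) (vb N P j) in
  let D := exterior_domain (polygon_interior N P) omega in
  fst e ^ 2 + snd e ^ 2 = 1 /\ PI < Om < 2 * PI /\
  (forall s p, 0 < s <= rho -> Rabs p < Om / 2 -> D (Tp Pj e s p)) /\
  (forall s, 0 <= s <= rho -> closure (polygon_interior N P) (Tp Pj e s (Om / 2)) /\
                             closure (polygon_interior N P) (Tp Pj e s (- (Om / 2)))) /\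
  (forall y, D y -> dist2 y Pj < rho -> exists p, Rabs p < Om / 2 /\ y = Tp Pj e (dist2 y Pj) p) /\
  ~ D Pj.
Proof.
  intros HP Hrg Hrg0 Hdl Hj Hr Hrr Hrd Pj e Om D.
  pose proof (cross_ab N P j HP Hj) as Hab.
  destruct (frame_facts _ _ Hab) as [He [HOm _]]. fold e Om in He, HOm.
  destruct (norm2_pos_of_cross _ _ Hab) as [Ha Hb].
  pose proof PI_RGT_0 as HPI.
  assert (Hdist : forall s p, 0 <= s -> dist2 (Tp Pj e s p) Pj = s) by (intros; apply dist2_Tp; auto).
  assert (HD1 : forall s p, 0 < s <= rho -> Rabs p < Om / 2 -> D (Tp Pj e s p)).
  { intros s p Hs Hp. split.
    - intro Hc. destruct (closure_adj N P j _ HP Hj Hc) as [C1 C2].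
      destruct (polar_cross N P j s p HP Hj) as [E1 E2]. fold e Om Pj in E1, E2. unfold Pj in *.
      rewrite E1 in C1. rewrite E2 in C2.
      destruct (Rle_or_lt 0 p).
      + assert (sin (p - Om / 2) < 0) by (apply sin_lt_0_var; unfold Rabs in Hp; destruct Rcase_abs; lra).
        assert (0 < norm2 (vb N P j) * s) by (apply Rmult_lt_0_compat; lra).
        assert (norm2 (vb N P j) * s * sin (p - Om / 2) < 0) by (apply Rmult_pos_neg; auto). lra.
      + assert (0 < sin (p + Om / 2)) by (apply sin_gt_0; unfold Rabs in Hp; destruct Rcase_abs; lra).
        assert (0 < norm2 (va N P j) * s) by (apply Rmult_lt_0_compat; lra).
        assert (0 < norm2 (va N P j) * s * sin (p + Om / 2)) by (apply Rmult_lt_0_compat; auto). lra.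
    - apply (not_cl_omega N P omega rg dl j); auto. rewrite Hdist by lra. lra. }
  assert (Hray : forall s, 0 <= s <= rho -> closure (polygon_interior N P) (Tp Pj e s (Om / 2)) /\
                             closure (polygon_interior N P) (Tp Pj e s (- (Om / 2)))).
  { intros s Hs. 
    destruct (polar_cross N P j s (Om / 2) HP Hj) as [E1 E2].
    destruct (polar_cross N P j s (- (Om / 2)) HP Hj) as [F1 F2]. fold e Om Pj in E1, E2, F1, F2.
    assert (sin Om < 0) by (apply sin_lt_0; lra).
    split; apply (in_closure N P rg j); auto; unfold Pj in *; try (rewrite Hdist by lra; lra).
    - rewrite E1. replace (Om / 2 - Om / 2) with 0 by ring. rewrite sin_0. lra.
    - rewrite E2. replace (Om / 2 + Om / 2) with Om by field. 
      assert (0 <= norm2 (va N P j) * s) by (apply Rmult_le_pos; lra). nra.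
    - rewrite F1. replace (- (Om / 2) - Om / 2) with (- Om) by field. rewrite sin_neg.
      assert (0 <= norm2 (vb N P j) * s) by (apply Rmult_le_pos; lra). nra.
    - rewrite F2. replace (- (Om / 2) + Om / 2) with 0 by ring. rewrite sin_0. lra. }
  assert (HnP : ~ D Pj).
  { intros [HD _]. apply HD. apply (Pj_closure N P rg j); auto. }
  split; auto. split; auto. split; auto. split; auto. split; auto.
  intros y Hy Hyd.
  set (X := FX Pj e y). set (Y := FY Pj e y). set (s := dist2 y Pj).
  assert (Hs0 : 0 < s).
  { destruct (Rle_lt_or_eq_dec 0 s (sqrt_pos _)) as [Hl|Hl]; auto.
    exfalso. apply HnP. rewrite <- (dist2_eq0 y Pj (eq_sym Hl)). auto. }
  assert (HXY : X ^ 2 + Y ^ 2 = (fst y - fst Pj) ^ 2 + (snd y - snd Pj) ^ 2).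
  { unfold X, Y, FX, FY. replace ((fst y - fst Pj) ^ 2 + (snd y - snd Pj) ^ 2) with
      (((fst y - fst Pj) ^ 2 + (snd y - snd Pj) ^ 2) * 1) by ring. rewrite <- He. ring. }
  assert (Hrad : rad X Y = s) by (unfold rad, s, dist2; rewrite HXY; reflexivity).
  assert (Hinv : y = (fst Pj + X * fst e - Y * snd e, snd Pj + X * snd e + Y * fst e)).
  { destruct y as [y1 y2]. unfold X, Y, FX, FY. cbn [fst snd]. f_equal.
    - replace y1 with (fst Pj + (y1 - fst Pj) * 1) at 1 by ring. rewrite <- He. ring.
    - replace y2 with (snd Pj + (y2 - snd Pj) * 1) at 1 by ring. rewrite <- He. ring. }
  assert (Hnot : cross2 (vb N P j) (vsub y (P j)) < 0 \/ 0 < cross2 (va N P j) (vsub y (P j))).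
  { destruct Hy as [Hy _]. apply NNPP. intro Hn. apply Hy.
    apply (in_closure N P rg j); auto; [unfold Pj, s in *; lra| |]; apply Rnot_lt_le; intro; apply Hn; auto. }
  destruct (Rle_or_lt (rad X Y + X) 0) as [Hneg|Hpos].
  { exfalso. pose proof (rad_ge X Y). rewrite Hrad in *.
    assert (HX : X = - s) by (unfold Rabs in H; destruct Rcase_abs; lra).
    assert (HY : Y = 0).
    { rewrite HX in HXY.
      assert (HS : s ^ 2 = (fst y - fst Pj) ^ 2 + (snd y - snd Pj) ^ 2) by (unfold s, dist2; rewrite pow2_sqrt; [auto|apply Rplus_le_le_0_compat; apply pow2_ge_0]).
      assert (Y ^ 2 = 0) by (rewrite <- HS in HXY; lra).
      destruct (Req_dec Y 0); auto. exfalso. apply (pow_nonzero Y 2 H1). auto. }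
    assert (Ey : y = Tp Pj e s PI).
    { rewrite Hinv. unfold Tp. rewrite cos_PI, sin_PI, HX, HY. f_equal; ring. }
    destruct (polar_cross N P j s PI HP Hj) as [E1 E2]. fold e Om Pj in E1, E2.
    unfold Pj in *. rewrite <- Ey in E1, E2.
    assert (0 <= sin (PI - Om / 2)) by (apply sin_ge_0; lra).
    assert (sin (PI + Om / 2) <= 0) by (apply sin_le_0; lra).
    assert (0 <= norm2 (vb N P j) * s) by (apply Rmult_le_pos; lra).
    assert (0 <= norm2 (va N P j) * s) by (apply Rmult_le_pos; lra).
    destruct Hnot as [Hn|Hn]; nra. }
  set (p := ang X Y).
  destruct (cos_sin_ang X Y Hpos) as [Hc Hsn]. fold p in Hc, Hsn. rewrite Hrad in Hc, Hsn.
  assert (Hpb : - PI < p < PI) by (unfold p, ang; pose proof (atan_bound (Y / (rad X Y + X))); split; lra).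
  assert (Ey : y = Tp Pj e s p).
  { rewrite Hinv at 1. unfold Tp. rewrite Hc, Hsn. f_equal; field; lra. }
  exists p. split; [|exact Ey].
  destruct (polar_cross N P j s p HP Hj) as [E1 E2]. fold e Om Pj in E1, E2.
  unfold Pj in *. rewrite <- Ey in E1, E2.
  assert (0 < norm2 (vb N P j) * s) by (apply Rmult_lt_0_compat; lra).
  assert (0 < norm2 (va N P j) * s) by (apply Rmult_lt_0_compat; lra).
  apply Rnot_le_lt. intro Hge. unfold Rabs in Hge; destruct Rcase_abs.
  - assert (0 <= sin (p - Om / 2)).
    { replace (p - Om / 2) with (- (- p + Om / 2)) by ring. rewrite sin_neg.
      assert (sin (- p + Om / 2) <= 0) by (apply sin_le_0; lra). lra. }
    assert (sin (p + Om / 2) <= 0).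
    { replace (p + Om / 2) with (- (- p - Om / 2)) by ring. rewrite sin_neg.
      assert (0 <= sin (- p - Om / 2)) by (apply sin_ge_0; lra). lra. }
    destruct Hnot as [Hn|Hn]; nra.
  - assert (0 <= sin (p - Om / 2)) by (apply sin_ge_0; lra).
    assert (sin (p + Om / 2) <= 0) by (apply sin_le_0; lra).
    destruct Hnot as [Hn|Hn]; nra.
Qed.

Lemma approx_closure (D : pset) Pj e Om rho : fst e ^ 2 + snd e ^ 2 = 1 -> 0 < rho -> 0 < Om ->
  (forall s p, 0 < s <= rho -> Rabs p < Om / 2 -> D (Tp Pj e s p)) ->
  forall s p, 0 <= s <= rho -> Rabs p <= Om / 2 -> closure D (Tp Pj e s p).
Proof.
  intros He Hr HOm H1 s p Hs Hp eps Heps.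
  set (s' := Rmax s (Rmin rho (eps / 16))).
  assert (Hm : 0 < Rmin rho (eps / 16)) by (apply Rmin_pos; lra).
  assert (Hs' : 0 < s' <= rho).
  { unfold s'. split; [eapply Rlt_le_trans; [exact Hm|apply Rmax_r]|].
    apply Rmax_lub; [lra|apply Rmin_l]. }
  assert (Hss : Rabs (s - s') <= eps / 16).
  { unfold s', Rmax. destruct Rle_dec.
    - pose proof (Rmin_r rho (eps / 16)). rewrite Rabs_left1; lra.
    - rewrite Rminus_eq_0, Rabs_R0. lra. }
  set (eta := Rmin (1 / 2) (eps / (16 * (rho + 1) * (Om + 1)))).
  assert (Heta : 0 < eta /\ eta <= 1 / 2) by (split; [apply Rmin_pos; [lra|apply Rdiv_lt_0_compat; [lra|]; apply Rmult_lt_0_compat; lra]|apply Rmin_l]).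
  assert (Heta2 : eta * (16 * (rho + 1) * (Om + 1)) <= eps).
  { apply Rle_trans with (eps / (16 * (rho + 1) * (Om + 1)) * (16 * (rho + 1) * (Om + 1))).
    - apply Rmult_le_compat_r; [|apply Rmin_r]. apply Rmult_le_pos; lra.
    - right. field. lra. }
  set (p' := p * (1 - eta)).
  assert (Hp' : Rabs p' < Om / 2).
  { unfold p'. rewrite Rabs_mult, (Rabs_pos_eq (1 - eta)) by lra.
    pose proof (Rabs_pos p). nra. }
  assert (Hpp : Rabs (p - p') <= eta * (Om / 2)).
  { unfold p'. replace (p - p * (1 - eta)) with (p * eta) by ring. rewrite Rabs_mult, (Rabs_pos_eq eta) by lra.
    pose proof (Rabs_pos p). nra. }
  exists (Tp Pj e s' p'). split; [apply H1; auto|].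
  eapply Rle_lt_trans; [apply Tp_lip; auto|].
  rewrite (Rabs_pos_eq s') by lra.
  assert (s' * Rabs (p - p') <= rho * (eta * (Om / 2))) by (apply Rmult_le_compat; try lra; apply Rabs_pos).
  assert (rho * (eta * (Om / 2)) <= eps / 16).
  { apply Rle_trans with (eta * (16 * (rho + 1) * (Om + 1)) / 16); [|lra].
    assert (0 <= eta * rho) by (apply Rmult_le_pos; lra). nra. }
  lra.
Qed.

Definition negf (f : pt -> R) : pt -> R := fun p => - f p.

Lemma dx_neg f q : dx (negf f) q = - dx f q.
Proof. unfold dx, negf. apply Derive_opp. Qed.
Lemma dy_neg f q : dy (negf f) q = - dy f q.
Proof. unfold dy, negf. apply Derive_opp. Qed.

Lemma ex_dx_neg f q : ex_dx f q -> ex_dx (negf f) q.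
Proof. unfold ex_dx, negf. intros H. apply (ex_derive_opp (K := R_AbsRing) (V := R_NormedModule) _ _ H). Qed.
Lemma ex_dy_neg f q : ex_dy f q -> ex_dy (negf f) q.
Proof. unfold ex_dy, negf. intros H. apply (ex_derive_opp (K := R_AbsRing) (V := R_NormedModule) _ _ H). Qed.

Lemma ex_dxdx_neg f q : ex_dx (dx f) q -> ex_dx (dx (negf f)) q.
Proof.
  unfold ex_dx. intros H. eapply ex_derive_ext; [|apply (ex_derive_opp (K := R_AbsRing) (V := R_NormedModule) _ _ H)].
  intros t. simpl. rewrite dx_neg. reflexivity.
Qed.
Lemma ex_dydy_neg f q : ex_dy (dy f) q -> ex_dy (dy (negf f)) q.
Proof.
  unfold ex_dy. intros H. eapply ex_derive_ext; [|apply (ex_derive_opp (K := R_AbsRing) (V := R_NormedModule) _ _ H)].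
  intros t. simpl. rewrite dy_neg. reflexivity.
Qed.
Lemma dxdx_neg f q : dx (dx (negf f)) q = - dx (dx f) q.
Proof.
  unfold dx at 1. rewrite (Derive_ext _ (fun t => - dx f (t, snd q))) by (intros; apply dx_neg).
  rewrite Derive_opp. reflexivity.
Qed.
Lemma dydy_neg f q : dy (dy (negf f)) q = - dy (dy f) q.
Proof.
  unfold dy at 1. rewrite (Derive_ext _ (fun t => - dy f (fst q, t))) by (intros; apply dy_neg).
  rewrite Derive_opp. reflexivity.
Qed.

Lemma Rpower_ge_self y a : 0 < y <= 1 -> 0 < a <= 1 -> y <= Rpower y a.
Proof.
  intros Hy Ha. unfold Rpower. rewrite <- (exp_ln y) at 1 by lra. 
  assert (ln y <= 0) by (rewrite <- ln_1; apply ln_le; lra).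
  assert (H0 : ln y <= a * ln y) by nra.
  destruct (Rle_lt_or_eq_dec _ _ H0) as [Hl|Hq]; [left; apply exp_increasing; auto|right; f_equal; exact Hq].
Qed.

Lemma Cmod_fst z : Rabs (fst z) <= Cmod z.
Proof. unfold Cmod. apply rad_ge. Qed.
Lemma Cmod_snd z : Rabs (snd z) <= Cmod z.
Proof. unfold Cmod. rewrite Rplus_comm. apply rad_ge. Qed.
Lemma Cmod_le_sum z : Cmod z <= Rabs (fst z) + Rabs (snd z).
Proof. unfold Cmod. apply sqrt_le_sum. Qed.

Lemma not_closure_open (S : pset) p : ~ closure S p -> exists eps, 0 < eps /\ forall q, dist2 p q < eps -> ~ closure S q.
Proof.
  intros H. unfold closure in H. apply not_all_ex_not in H. destruct H as [eps H].
  apply imply_to_and in H. destruct H as [He H].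
  exists (eps / 2). split; [lra|]. intros q Hq Hc. destruct (Hc (eps / 2) ltac:(lra)) as [r [Hr Hqr]].
  apply H. exists r. split; auto. pose proof (dist2_triang p q r). lra.
Qed.

Lemma open_exterior Omega omega : Defs.open_set (exterior_domain Omega omega).
Proof.
  intros p [H1 H2]. destruct (not_closure_open _ _ H1) as [e1 [He1 A1]].
  destruct (not_closure_open _ _ H2) as [e2 [He2 A2]].
  exists (Rmin e1 e2). split; [apply Rmin_pos; auto|]. intros q Hq. split.
  - apply A1. eapply Rlt_le_trans; [exact Hq|apply Rmin_l].
  - apply A2. eapply Rlt_le_trans; [exact Hq|apply Rmin_r].
Qed.

Lemma ext_angle_eq N P j : (j < N)%nat -> exterior_angle N P j = Om_of (va N P j) (vb N P j).
Proof. intros Hj. unfold exterior_angle, Om_of, gam_of, va, vb. rewrite (vtx_lt N P j Hj). reflexivity. Qed.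

Lemma comp_bound N P omega rg dl j rho k M (f : pt -> R) :
  convex_polygon N P -> RG N P rg -> 0 < rg ->
  (forall x z, polygon_interior N P x -> omega z -> dl <= dist2 x z) ->
  (j < N)%nat -> 0 < rho -> rho < rg -> 4 * rho <= dl -> 0 < k -> k * rho <= 1 -> 0 <= M ->
  let D := exterior_domain (polygon_interior N P) omega in
  (forall p, closure D p -> forall eps, 0 < eps -> exists dl', 0 < dl' /\
      forall q, closure D q -> dist2 p q < dl' -> Rabs (f q - f p) < eps) ->
  (forall p, closure D p -> f p <= M) ->
  (forall p, D p -> ex_dx f p /\ ex_dy f p /\ ex_dx (dx f) p /\ ex_dy (dy f) p) ->
  (forall p, D p -> dx (dx f) p + dy (dy f) p + k ^ 2 * f p = 0) ->
  (forall p, boundary D p -> f p = 0) ->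
  forall y, D y -> dist2 y (P j) < rho ->
    f y <= 6 * M * Rpower (dist2 y (P j) / rho) (PI / exterior_angle N P j).
Proof.
  intros HP Hrg Hrg0 Hdl Hj Hr Hrr Hrd Hk Hkr HM D Hfc HfM Hf2 Hhelm Hbd.
  destruct (vertex_sector N P omega rg dl j rho HP Hrg Hrg0 Hdl Hj Hr Hrr Hrd) as [He [HOm [H1 [Hray [Hrep HnP]]]]].
  fold D in H1, Hrep, HnP.
  set (e := e_of (va N P j) (vb N P j)) in *. set (Om := Om_of (va N P j) (vb N P j)) in *.
  rewrite (ext_angle_eq N P j Hj). fold Om.
  assert (H2 := approx_closure D (P j) e Om rho He Hr ltac:(lra) H1).
  assert (Hbdry : forall s, 0 <= s <= rho -> f (Tp (P j) e s (Om / 2)) = 0 /\ f (Tp (P j) e s (- (Om / 2))) = 0).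
  { intros s Hs. destruct (Hray s Hs) as [C1 C2]. split; apply Hbd; split.
    - apply H2; auto. rewrite Rabs_pos_eq; lra.
    - intros eps Heps. exists (Tp (P j) e s (Om / 2)). split; [intros [HD _]; apply HD; auto|]. rewrite dist2_refl; auto.
    - apply H2; auto. rewrite Rabs_Ropp, Rabs_pos_eq; lra.
    - intros eps Heps. exists (Tp (P j) e s (- (Om / 2))). split; [intros [HD _]; apply HD; auto|]. rewrite dist2_refl; auto. }
  apply (sector_max (P j) e Om rho k M D f He HOm Hr Hk Hkr HM (open_exterior _ _) H1 H2 Hbdry Hrep HnP Hfc HfM Hf2 Hhelm).
Qed.

Definition comp_hyps (D : pset) k M (f : pt -> R) :=
  (forall p, closure D p -> forall eps, 0 < eps -> exists dl', 0 < dl' /\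
      forall q, closure D q -> dist2 p q < dl' -> Rabs (f q - f p) < eps) /\
  (forall p, closure D p -> Rabs (f p) <= M) /\
  (forall p, D p -> ex_dx f p /\ ex_dy f p /\ ex_dx (dx f) p /\ ex_dy (dy f) p) /\
  (forall p, D p -> dx (dx f) p + dy (dy f) p + k ^ 2 * f p = 0) /\
  (forall p, boundary D p -> f p = 0).

Lemma comp_hyps_neg D k M f : comp_hyps D k M f -> comp_hyps D k M (negf f).
Proof.
  intros [A [B [C [E F]]]]. split; [|split; [|split; [|split]]].
  - intros p Hp eps He. destruct (A p Hp eps He) as [d [Hd H]]. exists d; split; auto.
    intros q Hq Hpq. unfold negf. replace (- f q - - f p) with (- (f q - f p)) by ring. rewrite Rabs_Ropp. auto.
  - intros p Hp. unfold negf. rewrite Rabs_Ropp. auto.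
  - intros p Hp. destruct (C p Hp) as [C1 [C2 [C3 C4]]].
    repeat split; [apply ex_dx_neg|apply ex_dy_neg|apply ex_dxdx_neg|apply ex_dydy_neg]; auto.
  - intros p Hp. rewrite dxdx_neg, dydy_neg. unfold negf. specialize (E p Hp). lra.
  - intros p Hp. unfold negf. rewrite F; auto. ring.
Qed.

Lemma fst_Cminus a b : fst (Cminus a b) = fst a - fst b.
Proof. unfold Cminus, Cplus, Copp; simpl. ring. Qed.
Lemma snd_Cminus a b : snd (Cminus a b) = snd a - snd b.
Proof. unfold Cminus, Cplus, Copp; simpl. ring. Qed.

Lemma comp_hyps_u D k M (u : pt -> C) :
  C2_on_C D u -> continuous_on_C (closure D) u -> (forall p, D p -> helmholtz_at k u p) ->
  (forall p, boundary D p -> u p = RtoC 0) -> (forall p, closure D p -> Cmod (u p) <= M) ->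
  comp_hyps D k M (Re_f u) /\ comp_hyps D k M (Im_f u).
Proof.
  intros [HR HI] Hc Hh Hb HM. split; split; [| split; [|split; [|split]] | | split; [|split; [|split]]].
  - intros p Hp eps He. destruct (Hc p Hp eps He) as [d [Hd H]]. exists d; split; auto.
    intros q Hq Hpq. unfold Re_f. rewrite <- fst_Cminus. eapply Rle_lt_trans; [apply Cmod_fst|]. auto.
  - intros p Hp. unfold Re_f. eapply Rle_trans; [apply Cmod_fst|]. auto.
  - intros p Hp. destruct (HR p Hp) as [A1 [A2 [A3 [A4 [A5 [A6 _]]]]]]. auto.
  - intros p Hp. destruct (Hh p Hp) as [A _]. unfold laplacian in A. exact A.
  - intros p Hp. unfold Re_f. rewrite Hb; auto.
  - intros p Hp eps He. destruct (Hc p Hp eps He) as [d [Hd H]]. exists d; split; auto.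
    intros q Hq Hpq. unfold Im_f. rewrite <- snd_Cminus. eapply Rle_lt_trans; [apply Cmod_snd|]. auto.
  - intros p Hp. unfold Im_f. eapply Rle_trans; [apply Cmod_snd|]. auto.
  - intros p Hp. destruct (HI p Hp) as [A1 [A2 [A3 [A4 [A5 [A6 _]]]]]]. auto.
  - intros p Hp. destruct (Hh p Hp) as [_ A]. unfold laplacian in A. exact A.
  - intros p Hp. unfold Im_f. rewrite Hb; auto.
Qed.

Lemma comp_bound2 N P omega rg dl j rho k M (f : pt -> R) :
  convex_polygon N P -> RG N P rg -> 0 < rg ->
  (forall x z, polygon_interior N P x -> omega z -> dl <= dist2 x z) ->
  (j < N)%nat -> 0 < rho -> rho < rg -> 4 * rho <= dl -> 0 < k -> k * rho <= 1 -> 0 <= M ->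
  comp_hyps (exterior_domain (polygon_interior N P) omega) k M f ->
  forall y, exterior_domain (polygon_interior N P) omega y -> dist2 y (P j) < rho ->
    Rabs (f y) <= 6 * M * Rpower (dist2 y (P j) / rho) (PI / exterior_angle N P j).
Proof.
  intros HP Hrg Hrg0 Hdl Hj Hr Hrr Hrd Hk Hkr HM Hc y Hy Hyd.
  pose proof (comp_hyps_neg _ _ _ _ Hc) as Hn.
  destruct Hc as [A [B [C [E F]]]]. destruct Hn as [A' [B' [C' [E' F']]]].
  assert (B1 : forall p, closure (exterior_domain (polygon_interior N P) omega) p -> f p <= M).
  { intros p Hp. specialize (B p Hp). unfold Rabs in B; destruct Rcase_abs; lra. }
  assert (B2 : forall p, closure (exterior_domain (polygon_interior N P) omega) p -> negf f p <= M).
  { intros p Hp. specialize (B' p Hp). unfold Rabs in B'; destruct Rcase_abs; lra. }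
  pose proof (comp_bound N P omega rg dl j rho k M f HP Hrg Hrg0 Hdl Hj Hr Hrr Hrd Hk Hkr HM A B1 C E F y Hy Hyd) as X1.
  pose proof (comp_bound N P omega rg dl j rho k M (negf f) HP Hrg Hrg0 Hdl Hj Hr Hrr Hrd Hk Hkr HM A' B2 C' E' F' y Hy Hyd) as X2.
  unfold negf in X2. unfold Rabs; destruct Rcase_abs; lra.
Qed.

Theorem lemma3p6 :
  forall (N : nat) (P : nat -> pt) (omega : pset) (cstar : R),
    convex_polygon N P ->
    admissible_obstacle omega ->
    (forall x, omega x -> ~ closure (polygon_interior N P) x) ->
    dist_sets_pos (polygon_interior N P) omega ->
    0 < cstar ->
  exists Cc : R, 0 < Cc /\
  forall (k : R) (d : pt) (u : pt -> C) (j : nat) (x : pt),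
    let Omega := polygon_interior N P in
    let D := exterior_domain Omega omega in
    0 < k ->
    (forall i, (i < N)%nat -> cstar <= k * side_length N P i) ->
    norm2 d = 1 ->
    C2_on_C D u ->
    continuous_on_C (closure D) u ->
    (forall p, D p -> helmholtz_at k u p) ->
    (forall p, boundary D p -> u p = RtoC 0) ->
    sommerfeld k (fun y => Cminus (u y) (plane_wave k d y)) ->
    (j < N)%nat ->
    D x ->
    0 < dist2 x (P j) <= 1 / k ->
    lt_dist_pt_set (dist2 x (P j)) (P j) (boundary omega) ->
    Rbar_le (Finite (Cmod (u x)))
      (Rbar_mult (Finite (Cc * Rpower (k * dist2 x (P j)) (PI / exterior_angle N P j)))
                 (sup_norm_on D u)).
Proof.
  intros N P omega cstar HP _ _ [dl [Hdl Hdlp]] Hc.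
  destruct (geo_radius N P HP) as [rg [Hrg0 Hrg]].
  pose proof HP as [HN _].
  set (rgeo := Rmin (rg / 2) (dl / 4)).
  assert (Hrgeo : 0 < rgeo) by (apply Rmin_pos; lra).
  set (L0 := side_length N P 0).
  set (K0 := Rmax 1 (L0 / (cstar * rgeo))).
  assert (HK0 : 1 <= K0) by apply Rmax_l.
  exists (12 * K0). split; [lra|].
  intros k d u j x Omega D Hk HL Hd HC2 Hcont Hhelm Hbd _ Hj HxD Hr _.
  assert (HL0 : cstar <= k * L0) by (apply HL; lia).
  assert (HL0p : 0 < L0).
  { destruct (Rle_or_lt L0 0); auto. assert (k * L0 <= 0) by (apply Rmult_le_0_l; lra). lra. }
  pose proof (cross_ab N P j HP Hj) as Hab.
  destruct (frame_facts _ _ Hab) as [_ [HOm _]]. rewrite <- (ext_angle_eq N P j Hj) in HOm.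
  set (Om := exterior_angle N P j) in *. set (al := PI / Om).
  pose proof PI_RGT_0 as HPI.
  assert (Hal : 0 < al <= 1).
  { unfold al. split; [apply Rdiv_lt_0_compat; lra|]. apply (Rmult_le_reg_r Om); [lra|].
    unfold Rdiv. rewrite Rmult_assoc, Rinv_l by lra. lra. }
  set (r := dist2 x (P j)) in *.
  set (rho := Rmin (1 / k) rgeo).
  assert (Hrho : 0 < rho) by (apply Rmin_pos; [apply Rdiv_lt_0_compat|]; lra).
  assert (Hrho1 : rho <= 1 / k) by apply Rmin_l.
  assert (Hrho2 : rho <= rgeo) by apply Rmin_r.
  assert (Hrgeo1 : rgeo <= rg / 2) by apply Rmin_l.
  assert (Hrgeo2 : rgeo <= dl / 4) by apply Rmin_r.
  assert (Hkrho : k * rho <= 1).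
  { apply Rle_trans with (k * (1 / k)); [apply Rmult_le_compat_l; lra|]. right; field; lra. }
  assert (Hkrho0 : 1 / K0 <= k * rho).
  { unfold rho, Rmin. destruct Rle_dec.
    - replace (k * (1 / k)) with 1 by (field; lra). apply (Rmult_le_reg_r K0); [lra|].
      replace (1 / K0 * K0) with 1 by (field; lra). lra.
    - assert (HK1 : L0 / (cstar * rgeo) <= K0) by apply Rmax_r.
      apply (Rmult_le_reg_r K0); [lra|]. replace (1 / K0 * K0) with 1 by (field; lra).
      apply Rle_trans with (k * rgeo * (L0 / (cstar * rgeo))).
      + replace (k * rgeo * (L0 / (cstar * rgeo))) with ((k * L0) / cstar) by (field; lra).
        apply (Rmult_le_reg_r cstar); [lra|]. replace (k * L0 / cstar * cstar) with (k * L0) by (field; lra). lra.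
      + apply Rmult_le_compat_l; auto. apply Rmult_le_pos; lra. }
  assert (HKpos : 0 < 1 / K0) by (apply Rdiv_lt_0_compat; lra).
  set (E := fun v => exists y, D y /\ v = Cmod (u y)).
  assert (Hub : forall y, D y -> Rbar_le (Finite (Cmod (u y))) (sup_norm_on D u)).
  { intros y Hy. destruct (Lub_Rbar_correct E) as [H _]. apply H. exists y; auto. }
  assert (Hpow : 0 < Rpower (k * r) al) by (unfold Rpower; apply exp_pos).
  assert (Hcc : 0 < 12 * K0 * Rpower (k * r) al) by (apply Rmult_lt_0_compat; lra).
  specialize (Hub x HxD) as Hux.
  destruct (sup_norm_on D u) as [M| |] eqn:HS.
  2: { simpl. destruct (Rle_dec 0 (12 * K0 * Rpower (k * r) al)); [|lra].
       destruct (Rle_lt_or_eq_dec 0 _ r0); [simpl; auto|lra]. }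
  2: { simpl in Hux. contradiction. }
  simpl. simpl in Hux.
  assert (HMy : forall y, D y -> Cmod (u y) <= M).
  { intros y Hy. pose proof (Hub y Hy) as H. simpl in H. exact H. }
  assert (HM0 : 0 <= M) by (pose proof (sqrt_pos (fst (u x) ^ 2 + snd (u x) ^ 2)); unfold Cmod in Hux; lra).
  assert (HMcl : forall p, closure D p -> Cmod (u p) <= M).
  { intros p Hp. apply Rnot_lt_le. intro Hlt.
    destruct (Hcont p Hp (Cmod (u p) - M) ltac:(lra)) as [dd [Hdd Hq]].
    destruct (Hp dd Hdd) as [q [Hq1 Hq2]].
    assert (HqD : closure D q) by (intros ee Hee; exists q; split; auto; rewrite dist2_refl; auto).
    specialize (Hq q HqD Hq2). pose proof (HMy q Hq1).
    assert (Cmod (u p) <= Cmod (u q) + Cmod (Cminus (u q) (u p))).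
    { replace (u p) with (Cplus (u q) (Copp (Cminus (u q) (u p)))) at 1.
      - eapply Rle_trans; [apply Cmod_triangle|]. rewrite Cmod_opp. lra.
      - unfold Cminus, Cplus, Copp. destruct (u p), (u q). simpl. f_equal; ring. }
    lra. }
  destruct (comp_hyps_u D k M u HC2 Hcont Hhelm Hbd HMcl) as [CR CI].
  assert (Hcm : Cmod (u x) <= M) by (apply HMy; auto).
  destruct (Rlt_or_le r rho) as [Hlt|Hge].
  - pose proof (comp_bound2 N P omega rg dl j rho k M (Re_f u) HP Hrg Hrg0 Hdlp Hj Hrho ltac:(lra) ltac:(lra) Hk Hkrho HM0 CR x HxD Hlt) as XR.
    pose proof (comp_bound2 N P omega rg dl j rho k M (Im_f u) HP Hrg Hrg0 Hdlp Hj Hrho ltac:(lra) ltac:(lra) Hk Hkrho HM0 CI x HxD Hlt) as XI.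
    fold Om al r in XR, XI.
    pose proof (Cmod_le_sum (u x)) as Hsum. unfold Re_f, Im_f in XR, XI.
    assert (Hq : Rpower (r / rho) al <= K0 * Rpower (k * r) al).
    { replace (r / rho) with ((k * r) / (k * rho)) by (field; lra).
      rewrite Rpower_div by (apply Rmult_lt_0_compat; lra).
      assert (Hkr1 : k * rho <= Rpower (k * rho) al) by (apply Rpower_ge_self; [split; [apply Rmult_lt_0_compat|]|]; lra).
      assert (Hpr : 0 < Rpower (k * rho) al) by (unfold Rpower; apply exp_pos).
      unfold Rdiv. apply (Rmult_le_reg_r (Rpower (k * rho) al)); auto.
      rewrite Rmult_assoc, Rinv_l, Rmult_1_r by lra.
      assert (1 <= K0 * Rpower (k * rho) al).
      { apply Rle_trans with (K0 * (1 / K0)); [right; field; lra|]. apply Rmult_le_compat_l; lra. }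
      nra. }
    assert (0 <= M * Rpower (r / rho) al) by (apply Rmult_le_pos; auto; unfold Rpower; left; apply exp_pos).
    assert (M * Rpower (r / rho) al <= M * (K0 * Rpower (k * r) al)) by (apply Rmult_le_compat_l; auto).
    nra.
  - assert (Hkr : 1 / K0 <= k * r).
    { apply Rle_trans with (k * rho); auto. apply Rmult_le_compat_l; lra. }
    assert (Hkr1 : k * r <= 1).
    { apply Rle_trans with (k * (1 / k)); [apply Rmult_le_compat_l; lra|]. right; field; lra. }
    assert (Hge2 : k * r <= Rpower (k * r) al) by (apply Rpower_ge_self; [split; [apply Rmult_lt_0_compat|]|]; lra).
    assert (1 <= K0 * Rpower (k * r) al).
    { apply Rle_trans with (K0 * (1 / K0)); [right; field; lra|]. apply Rmult_le_compat_l; lra. }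
    nra.
Qed.
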